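(* Let $K$ be a field, $\alpha$ an ordinal and $0<n<\omega$. Then $B_{\alpha,n}\in\mathfrak R_K$, $B_{\alpha,n}$ has Loewy length $\alpha+1$ and top layer dimension $n$. Moreover, if $\alpha$ is countable, then $B_{\alpha,n}$ is of countable type.
   Context: Socle sequence: $S_0=0$, $S_{\alpha+1}/S_\alpha=\mathrm{Soc}(R/S_\alpha)$, unions at limits; semiartinian of Loewy length $\sigma+1$ means $S_{\sigma+1}=R\ne S_\sigma$; layers $L_\alpha=S_{\alpha+1}/S_\alpha$. $K^{(\lambda)}$ is the direct sum of $\lambda$ copies of $K$ as a $K$-algebra without unit. $\mathfrak R_K$ is the class of commutative von Neumann regular semiartinian $K$-algebras $R$ of Loewy length $\sigma+1$ such that for each $\alpha\le\sigma$ there is a cardinal $\lambda_\alpha>0$ and a $K$-linear isomorphism of $K$-algebras without unit $L_\alpha\cong K^{(\lambda_\alpha)}$; $\lambda_\sigma$ (finite) is the top layer dimension; $R$ is of countable type if $\sigma$ and all $\lambda_\alpha$ are countable. For a sequence $\mathcal R=(R_i\mid i\in A)$ of $K$-algebras indexed by an infinite set $A$, $R(A,K,\mathcal R)$ is the $K$-subalgebra $\bigoplus_{i\in A}R_i\oplus 1_P\cdot K$ of $P=\prod_{i\in A}R_i$. $\boxplus$ is ring direct product. Define $B_{0,1}=K$; $B_{\beta+1,1}=R(\aleph_0,K,\mathcal R)$ with $\mathcal R$ the constant sequence $R_m=B_{\beta,1}$ ($m<\aleph_0$); for limit $\alpha$, $B_{\alpha,1}=R(\alpha,K,(B_{\beta,1}\mid\beta<\alpha))$;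 and $B_{\alpha,n}=B_{\alpha,1}\boxplus\cdots\boxplus B_{\alpha,1}$ ($n$ copies). *)

(* Defs.v *)
From mathcomp Require Import ssreflect ssrfun ssrbool eqtype ssrnat seq fintype ssralg.
From Stdlib Require List.
Unset Printing Implicit Defensive.
Import GRing.Theory.
Local Open Scope ring_scope.

(* An ordinal alpha is the order type of a well-ordered type T; the    *)
(* elements of T are the ordinals beta < alpha.                        *)
Record wo := WO {
  car :> Type;
  ltw : car -> car -> Prop;
  ltw_wf : well_founded ltw;
  ltw_trans : forall x y z, ltw x y -> ltw y z -> ltw x z;
  ltw_total : forall x y, ltw x y \/ x = y \/ ltw y x }.

(* option T = the ordinals <= alpha, with None playing the role of alpha. *)
Definition ext_lt {T : wo} (a b : option T) : Prop :=
  match a, b with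
  | Some x, Some y => ltw T x y
  | Some _, None => True
  | None, _ => False
  end.

Lemma ext_wf (T : wo) : well_founded (@ext_lt T).
Proof.
assert (accS : forall x : car T, Acc (@ext_lt T) (Some x)).
{ intro x. induction (ltw_wf T x) as [x _ IH]. constructor.
  intros [y|] H; [ exact (IH y H) | destruct H ]. }
intros [x|]; [ exact (accS x) | ].
constructor. intros [y|] H; [ exact (accS y) | destruct H ].
Qed.

Definition countable (I : Type) := exists f : I -> nat, injective f.

Definition is_zero {A} (R : A -> A -> Prop) t := forall s, ~ R s t.
Definition is_pred {A} (R : A -> A -> Prop) s t :=
  R s t /\ forall u, R u t -> u = s \/ R u s.
Definition is_limit {A} (R : A -> A -> Prop) t :=
  (exists s, R s t) /\ ~ (exists s, is_pred R s t).

(* Commutative K-algebras presented as algebras of K-valued functions  *)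
(* (pointwise operations) on a set X, given by a predicate P.          *)
Section FunAlg.
Variables (K : fieldType) (X : Type).

Definition fpred := (X -> K) -> Prop.
Definition f0 : X -> K := fun _ => 0.
Definition fadd (f g : X -> K) : X -> K := fun x => f x + g x.
Definition fopp (f : X -> K) : X -> K := fun x => - f x.
Definition fmul (f g : X -> K) : X -> K := fun x => f x * g x.
Definition fscale (k : K) (f : X -> K) : X -> K := fun x => k * f x.
Definition fsum (s : seq (X -> K)) : X -> K := foldr fadd f0 s.

Definition fsubset (I J : fpred) := forall f, I f -> J f.
Definition fsameset (I J : fpred) := forall f, I f <-> J f.

Definition is_falg (P : fpred) :=
  P f0 /\ [/\ (forall f g, P f -> P g -> P (fadd f g)),
      (forall f, P f -> P (fopp f)),
      (forall f g, P f -> P g -> P (fmul f g)),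
      (forall k f, P f -> P (fscale k f)) &
      exists e, P e /\ forall f, P f -> fmul e f = f].

Definition vN_regular (P : fpred) :=
  forall a, P a -> exists x, P x /\ fmul (fmul a x) a = a.

Definition is_ideal (P I : fpred) :=
  [/\ fsubset I P, I f0, (forall f g, I f -> I g -> I (fadd f g)),
      (forall f, I f -> I (fopp f)) &
      (forall r f, P r -> I f -> I (fmul r f))].

(* M/I is a minimal (nonzero) ideal of R/I, via the correspondence theorem *)
Definition minimal_over (P I M : fpred) :=
  [/\ is_ideal P M, fsubset I M, (exists f, M f /\ ~ I f) &
      forall N, is_ideal P N -> fsubset I N -> fsubset N M ->
        fsameset N I \/ fsameset N M].

(* soc_next P I = the ideal J with J/I = Soc(R/I) (sum of the minimal
   ideals of R/I), pulled back to R *)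
Definition soc_next (P I : fpred) : fpred := fun f =>
  P f /\ exists gs : seq (X -> K),
    (forall g, List.In g gs -> exists M, minimal_over P I M /\ M g) /\
    I (fadd f (fopp (fsum gs))).

Definition soc_seq (P : fpred) {A : Type} (R : A -> A -> Prop)
    (wf : well_founded R) : A -> fpred :=
  Fix wf (fun _ => fpred) (fun t rec f =>
    (is_zero R t /\ f = f0) \/
    (exists s (h : R s t), is_pred R s t /\ soc_next P (rec s h) f) \/
    (is_limit R t /\ exists s (h : R s t), rec s h f)).

(* socle sequence (S_beta)_{beta <= sigma}; None stands for sigma *)
Definition Sseq (P : fpred) (sigma : wo) : option sigma -> fpred :=
  soc_seq P _ (ext_wf sigma).

(* R is semiartinian of Loewy length sigma+1 : S_{sigma+1} = R <> S_sigma *)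
Definition loewy (P : fpred) (sigma : wo) :=
  fsameset (soc_next P (Sseq P sigma None)) P /\
  ~ fsameset (Sseq P sigma None) P.

Definition finsupp (Ix : Type) (v : Ix -> K) :=
  exists L : seq Ix, forall i, ~ List.In i L -> v i = 0.

(* The layer soc_next P I / I is isomorphic, as a K-algebra without
   unit, to K^(Ix) (finitely supported functions, pointwise operations):
   stated via a surjective K-linear multiplicative map
   soc_next P I -> K^(Ix) with kernel exactly I. *)
Definition layer_iso (P I : fpred) (Ix : Type) :=
  exists phi : (X -> K) -> (Ix -> K),
  let J := soc_next P I in
  (forall f, J f -> finsupp Ix (phi f)) /\
  [/\ (forall f g, J f -> J g -> phi (fadd f g) = fun i => phi f i + phi g i),
      (forall k f, J f -> phi (fscale k f) = fun i => k * phi f i),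
      (forall f g, J f -> J g -> phi (fmul f g) = fun i => phi f i * phi g i),
      (forall v, finsupp Ix v -> exists f, J f /\ phi f = v) &
      (forall f, J f -> (phi f = fun _ => 0) <-> I f)].

Definition in_RK (P : fpred) :=
  [/\ is_falg P, vN_regular P &
      exists sigma : wo, loewy P sigma /\
        forall beta : option sigma, exists Ix : Type,
          inhabited Ix /\ layer_iso P (Sseq P sigma beta) Ix].

Definition top_dim (P : fpred) (sigma : wo) (n : nat) :=
  layer_iso P (Sseq P sigma None) 'I_n.

Definition countable_type (P : fpred) :=
  in_RK P /\ exists sigma : wo, [/\ loewy P sigma, countable sigma &
     forall beta : option sigma, exists Ix : Type,
       [/\ inhabited Ix, countable Ix & layer_iso P (Sseq P sigma beta) Ix]].

End FunAlg.

Arguments f0 {K X}. Arguments fadd {K X}. Arguments fopp {K X}.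
Arguments fmul {K X}. Arguments fscale {K X}. Arguments fsum {K X}.
Arguments fsubset {K X}. Arguments fsameset {K X}. Arguments is_falg {K X}.
Arguments vN_regular {K X}. Arguments is_ideal {K X}.
Arguments minimal_over {K X}. Arguments soc_next {K X}.
Arguments soc_seq {K X} P {A R}. Arguments Sseq {K X}. Arguments loewy {K X}.
Arguments finsupp {K}. Arguments layer_iso {K X}. Arguments in_RK {K X}.
Arguments top_dim {K X}. Arguments countable_type {K X}.

(* The algebras B_{beta,1} (beta <= alpha), realized as algebras of    *)
(* K-valued functions on a set of "points" (seq (nat + option T)),     *)
(* together with their supports D_beta.  R(A,K,(R_i)) is realized as   *)
(* the functions f on the disjoint union of the supports of the R_i    *)
(* whose restrictions f_i lie in R_i and such that, for some c in K,   *)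
(* f_i = c.1 for all but finitely many i.                              *)
Section BConstr.
Variables (K : fieldType) (T : wo).

Definition Pt := seq (nat + option T).
Local Notation Rw := (@ext_lt T).

Definition Bpair : option T -> (Pt -> Prop) * ((Pt -> K) -> Prop) :=
  Fix (@ext_wf T) (fun _ => ((Pt -> Prop) * ((Pt -> K) -> Prop))%type)
  (fun t rec =>
   let Dt := fun x : Pt =>
     (is_zero Rw t /\ x = [::]) \/
     (exists s (h : Rw s t), is_pred Rw s t /\
        exists m y, x = inl m :: y /\ (rec s h).1 y) \/
     (is_limit Rw t /\ exists s (h : Rw s t),
        exists y, x = inr s :: y /\ (rec s h).1 y) in
   (Dt, fun f : Pt -> K =>
     (forall x, ~ Dt x -> f x = 0) /\
     (is_zero Rw t \/
      (exists s (h : Rw s t), [/\ is_pred Rw s t,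
          (forall m : nat, (rec s h).2 (fun y => f (inl m :: y))) &
          exists (c : K) (L : seq nat), forall m, ~ List.In m L ->
             forall y, (rec s h).1 y -> f (inl m :: y) = c]) \/
      [/\ is_limit Rw t,
          (forall s (h : Rw s t), (rec s h).2 (fun y => f (inr s :: y))) &
          exists (c : K) (L : seq (option T)), forall s (h : Rw s t),
             ~ List.In s L -> forall y, (rec s h).1 y -> f (inr s :: y) = c]))).

Definition B1 : (Pt -> K) -> Prop := (Bpair None).2.

Definition Bn (n : nat) : (('I_n * Pt) -> K) -> Prop :=
  fun f => forall i : 'I_n, B1 (fun x => f (i, x)).

End BConstr.

(* Main.v *)
Require Import Defs.
From mathcomp Require Import ssreflect ssrfun ssrbool eqtype ssrnat seq choice fintype ssralg bigop.
From mathcomp Require Import ring.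
From Stdlib Require Import FunctionalExtensionality PropExtensionality ClassicalEpsilon Classical.
Set Implicit Arguments. Unset Strict Implicit. Unset Printing Implicit Defensive.
Import GRing.Theory.
Local Open Scope ring_scope.

Section Ord.
Variable T : wo.
Local Notation Rw := (@ext_lt T).

Lemma Rw_irr x : ~ Rw x x.
Proof. intro H. induction (ext_wf T x) as [x _ IH]. exact (IH x H H). Qed.

Lemma Rw_trans x y z : Rw x y -> Rw y z -> Rw x z.
Proof.
case: x => [x|]; case: y => [y|]; case: z => [z|] //=; try tauto.
exact: (@ltw_trans T).
Qed.

Lemma Rw_asym x y : Rw x y -> ~ Rw y x.
Proof. move=> H1 H2; exact: (Rw_irr (Rw_trans H1 H2)). Qed.

Lemma Rw_total x y : Rw x y \/ x = y \/ Rw y x.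
Proof.
case: x => [x|]; case: y => [y|] /=; try tauto.
case: (ltw_total T x y) => [H|[->|H]]; tauto.
Qed.

Lemma ord_cases t : is_zero Rw t \/ (exists s, is_pred Rw s t) \/ is_limit Rw t.
Proof.
case: (classic (exists s, Rw s t)) => [Hs|Hn].
- case: (classic (exists s, is_pred Rw s t)) => [Hp|Hp]; [tauto|].
  right; right; split => //.
- left => s Hst; apply: Hn; by exists s.
Qed.

Lemma pred_uniq s s' t : is_pred Rw s t -> is_pred Rw s' t -> s = s'.
Proof.
move=> [H1 H1'] [H2 H2'].
case: (H1' _ H2) => [//|H3]; case: (H2' _ H1) => [//|H4].
case: (Rw_irr (Rw_trans H3 H4)).
Qed.

Lemma zero_not_pred s t : is_zero Rw t -> ~ Rw s t.
Proof. by move=> H; apply: H. Qed.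

Lemma limit_between u t : is_limit Rw t -> Rw u t -> exists w, Rw u w /\ Rw w t.
Proof.
move=> [_ Hnp] Hut.
apply: NNPP => Hn; apply: Hnp; exists u; split => // w Hwt.
case: (Rw_total w u) => [H|[H|H]]; [tauto|tauto|].
case: Hn; by exists w.
Qed.

Lemma limit_fresh (A : Type) b t (L : list (A + option T)) :
  is_limit Rw t -> Rw b t ->
  exists s, [/\ Rw b s, Rw s t & ~ List.In (inr s) L].
Proof.
move=> Hl Hbt.
have [s [Hbs Hst Hab]] : exists s, [/\ Rw b s, Rw s t &
    forall u, List.In (inr u) L -> Rw u t -> u = s \/ Rw u s].
  elim: L => [|x L [s [Hbs Hst Hab]]].
  - have [w [H1 H2]] := limit_between Hl Hbt. by exists w; split.
  - case: x => [a|u].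
    + exists s; split => // u [//|Hu]; exact: Hab.
    + case: (classic (Rw u t)) => Hut; last first.
        exists s; split => // u' [[<-]//|Hu]; exact: Hab.
      case: (Rw_total u s) => [Hus|[Hus|Hsu]].
      * exists s; split => // u' [[<-]|Hu'] Hu't; [by right|exact: Hab].
      * exists s; split => // u' [[<-]|Hu'] Hu't; [by left|exact: Hab].
      * exists u; split => //; first exact: Rw_trans Hbs Hsu.
        move=> u' [[<-]|Hu'] Hu't; first by left.
        right; case: (Hab _ Hu' Hu't) => [->//|H]; exact: Rw_trans H Hsu.
have [w [Hsw Hwt]] := limit_between Hl Hst.
exists w; split => //; first exact: Rw_trans Hbs Hsw.
move=> Hin; case: (Hab _ Hin Hwt) => [E|H].
- subst; exact: Rw_irr Hsw.
- exact: Rw_irr (Rw_trans H Hsw).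
Qed.

End Ord.

Section B.
Variables (K : fieldType) (T : wo).
Local Notation Rw := (@ext_lt T).
Local Notation Pt := (Pt T).
Local Notation lab := (nat + option T)%type.

Definition BF (t : option T)
  (rec : forall s, Rw s t -> ((Pt -> Prop) * ((Pt -> K) -> Prop))%type) :
  ((Pt -> Prop) * ((Pt -> K) -> Prop))%type :=
   let Dt := fun x : Pt =>
     (is_zero Rw t /\ x = [::]) \/
     (exists s (h : Rw s t), is_pred Rw s t /\
        exists m y, x = inl m :: y /\ (rec s h).1 y) \/
     (is_limit Rw t /\ exists s (h : Rw s t),
        exists y, x = inr s :: y /\ (rec s h).1 y) in
   (Dt, fun f : Pt -> K =>
     (forall x, ~ Dt x -> f x = 0) /\
     (is_zero Rw t \/
      (exists s (h : Rw s t), [/\ is_pred Rw s t,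
          (forall m : nat, (rec s h).2 (fun y => f (inl m :: y))) &
          exists (c : K) (L : seq nat), forall m, ~ List.In m L ->
             forall y, (rec s h).1 y -> f (inl m :: y) = c]) \/
      [/\ is_limit Rw t,
          (forall s (h : Rw s t), (rec s h).2 (fun y => f (inr s :: y))) &
          exists (c : K) (L : seq (option T)), forall s (h : Rw s t),
             ~ List.In s L -> forall y, (rec s h).1 y -> f (inr s :: y) = c])).

Lemma Bpair_eq t : Bpair K T t = @BF t (fun s _ => Bpair K T s).
Proof.
rewrite /Bpair Fix_eq //.
move=> x f g H.
have -> : f = g by apply: functional_extensionality_dep => y;
   apply: functional_extensionality_dep => p; apply: H.
by [].
Qed.

Definition D a := (Bpair K T a).1.
Definition B a := (Bpair K T a).2.

Definition Child a (l : lab) s :=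
  (is_pred Rw s a /\ exists m, l = inl m) \/ (is_limit Rw a /\ l = inr s /\ Rw s a).

Lemma Child_lt a l s : Child a l s -> Rw s a.
Proof. by case=> [[[H _] _]|[_ [_ H]]]. Qed.

Lemma Child_det a l s s' : Child a l s -> Child a l s' -> s = s'.
Proof.
case=> [[H1 [m E1]]|[H1 [E1 H1']]]; case=> [[H2 [m' E2]]|[H2 [E2 H2']]].
- exact: pred_uniq H1 H2.
- by rewrite E1 in E2.
- by rewrite E1 in E2.
- by rewrite E1 in E2; case: E2.
Qed.

Lemma Child_nz a l s : Child a l s -> ~ is_zero Rw a.
Proof. by move=> /Child_lt H Hz; apply: (Hz s). Qed.

Definition mfresh (L : list lab) :=
  S (foldr (fun l acc => match l with inl m => (m + acc)%N | inr _ => acc end) 0%N L).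

Lemma mfresh_ok L : ~ List.In (inl (mfresh L)) L.
Proof.
suff H : forall m, List.In (inl m) L -> (m < mfresh L)%N.
  by move=> /H; rewrite ltnn.
elim: L => [//|x L IH] m /= [E|Hin].
- subst x; rewrite /mfresh /=; exact: leq_addr.
- have := IH _ Hin; rewrite /mfresh /=; case: x => [k|u] //= H.
  apply: leq_trans H _; exact: leq_addl.
Qed.

Lemma child_fresh a b (L : list lab) : Rw b a ->
  exists l s, [/\ Child a l s, ~ List.In l L & ~ Rw s b].
Proof.
move=> Hba; case: (ord_cases a) => [Hz|[[s Hp]|Hl]].
- by case: (Hz b).
- exists (inl (mfresh L)), s; split; [left; split=> //; by eexists|exact: mfresh_ok|].
  move=> Hsb; case: Hp => [_ Hp]; case: (Hp _ Hba) => [E|H].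
  + subst; exact: Rw_irr Hsb.
  + exact: Rw_asym H Hsb.
- have [s [H1 H2 H3]] := limit_fresh L Hl Hba.
  exists (inr s), s; split => //; [by right|exact: Rw_asym].
Qed.

Lemma nz_child a : ~ is_zero Rw a -> exists l s, Child a l s.
Proof.
move=> Hz; have [b Hb] : exists b, Rw b a.
  by apply: NNPP => H; apply: Hz => b Hb; apply: H; exists b.
have [l [s [H _ _]]] := child_fresh [::] Hb; by exists l, s.
Qed.

Lemma D_iff a x : D a x <->
  (is_zero Rw a /\ x = [::]) \/ exists l s y, [/\ Child a l s, x = l :: y & D s y].
Proof.
rewrite /D {1}Bpair_eq /=; split.
- case=> [H|[[s [h [Hp [m [y [E Hy]]]]]]|[Hl [s [h [y [E Hy]]]]]]]; [by left|right|right].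
  + exists (inl m), s, y; split => //; left; split => //; by exists m.
  + exists (inr s), s, y; split => //; by right.
- case=> [H|[l [s [y [[[Hp [m E1]]|[Hl [E1 Hsa]]] E Hy]]]]]; [by left|right;left|right;right].
  + exists s, (proj1 Hp); split => //; exists m, y; by subst.
  + split => //; exists s, Hsa, y; by subst.
Qed.

Lemma Child_D a l s y : Child a l s -> (D a (l :: y) <-> D s y).
Proof.
move=> Hc; rewrite D_iff; split.
- case=> [[_ //]|[l' [s' [y' [Hc' [E1 E2] Hy]]]]].
  subst; by rewrite (Child_det Hc Hc').
- move=> Hy; right; by exists l, s, y.
Qed.

Lemma D_nil a : ~ is_zero Rw a -> ~ D a [::].
Proof. by move=> Hz /D_iff [[//]|[l [s [y [_ //]]]]]. Qed.

Lemma D_zero a : is_zero Rw a -> D a [::].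
Proof. move=> Hz; apply/D_iff; by left. Qed.

Lemma D_ne a : exists y, D a y.
Proof.
induction (ext_wf T a) as [a _ IH].
case: (classic (is_zero Rw a)) => Hz; first by exists [::]; exact: D_zero.
have [l [s Hc]] := nz_child Hz.
have [y Hy] := IH s (Child_lt Hc).
exists (l :: y); by apply/(Child_D _ Hc).
Qed.


Lemma B_raw a g : B a g <->
  (forall x, ~ D a x -> g x = 0) /\
  (is_zero Rw a \/
   (exists s, Rw s a /\ [/\ is_pred Rw s a,
      (forall m : nat, B s (fun y => g (inl m :: y))) &
      exists (c : K) (L : seq nat), forall m, ~ List.In m L ->
          forall y, D s y -> g (inl m :: y) = c]) \/
   [/\ is_limit Rw a,
      (forall s, Rw s a -> B s (fun y => g (inr s :: y))) &
      exists (c : K) (L : seq (option T)), forall s, Rw s a ->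
          ~ List.In s L -> forall y, D s y -> g (inr s :: y) = c]).
Proof.
rewrite /B /D Bpair_eq /=.
split => [[Hv Hc]|[Hv Hc]]; split => //.
- case: Hc => [Hz|[[s [h [Hp Hch Hcst]]]|[Hl Hch [c [L Hcst]]]]]; [by left|right;left|right;right].
  + exists s; split => //.
  + split => //; exists c, L => s h; exact: Hcst.
- case: Hc => [Hz|[[s [h [Hp Hch Hcst]]]|[Hl Hch [c [L Hcst]]]]]; [by left|right;left|right;right].
  + exists s, h; split => //.
  + split => //; exists c, L => s h; exact: Hcst.
Qed.

Definition V a (g : Pt -> K) c :=
  (is_zero Rw a /\ g [::] = c) \/
  (~ is_zero Rw a /\ exists L : list lab, forall l s, Child a l s ->
      ~ List.In l L -> forall y, D s y -> g (l :: y) = c).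

Fixpoint linl (L : list lab) : list nat :=
  match L with [::] => [::] | inl m :: L => m :: linl L | _ :: L => linl L end.
Fixpoint linr (L : list lab) : list (option T) :=
  match L with [::] => [::] | inr m :: L => m :: linr L | _ :: L => linr L end.

Lemma linl_in m L : List.In (inl m) L -> List.In m (linl L).
Proof. induction L as [|x L IH]; simpl; [tauto|]. destruct x as [k|u]; simpl; intros [E|H]; try (inversion E; subst); auto. Qed.
Lemma linr_in m L : List.In (inr m) L -> List.In m (linr L).
Proof. induction L as [|x L IH]; simpl; [tauto|]. destruct x as [k|u]; simpl; intros [E|H]; try (inversion E; subst); auto. Qed.

Lemma in_map_inl m (L : list nat) : List.In m L -> List.In (@inl nat (option T) m) (map inl L).
Proof. elim: L => [//|k L IH] /= [->|H]; auto. Qed.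
Lemma in_map_inr m (L : list (option T)) : List.In m L -> List.In (@inr nat (option T) m) (map inr L).
Proof. elim: L => [//|k L IH] /= [->|H]; auto. Qed.

Lemma B_iff a g : B a g <->
  [/\ (forall x, ~ D a x -> g x = 0),
      (forall l s, Child a l s -> B s (fun y => g (l :: y))) &
      exists c, V a g c].
Proof.
rewrite B_raw; split.
- case=> Hv [Hz|[[s [h [Hp Hch [c [L Hc]]]]]|[Hl Hch [c [L Hc]]]]]; split => //.
  + by move=> l s /Child_nz.
  + exists (g [::]); by left.
  + move=> l s' [[Hp' [m ->]]|[Hl _]].
    * by rewrite (pred_uniq Hp' Hp).
    * by case: Hl => _ []; exists s.
  + have Hc0 : Child a (inl 0%N) s by left; split => //; exists 0%N.
    exists c; right; split; first exact: Child_nz Hc0.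
    exists (map inl L) => l s' [[Hp' [m ->]]|[Hl _]] Hin y Hy.
    * rewrite (pred_uniq Hp' Hp) in Hy; apply: Hc Hy => Hm; apply: Hin; exact: in_map_inl.
    * by case: Hl => _ []; exists s.
  + move=> l s [[Hp _]|[_ [-> Hsa]]]; [by case: Hl => _ []; exists s|exact: Hch].
  + exists c; right; split.
      by case: Hl => [[s Hs] _] Hz; apply: (Hz s).
    exists (map inr L) => l s [[Hp _]|[_ [-> Hsa]]] Hin y Hy.
    * by case: Hl => _ []; exists s.
    * apply: Hc Hy => //; move=> Hm; apply: Hin; exact: in_map_inr.
- case=> Hv Hch [c Hc]; split => //.
  case: (ord_cases a) => [Hz|[[s Hp]|Hl]]; [by left|right;left|right;right].
  + have Hc' : forall m, Child a (inl m) s by move=> m; left; split => //; exists m.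
    exists s; split; first exact: (proj1 Hp).
    split => //; first by move=> m; exact: Hch (Hc' m).
    case: Hc => [[Hz _]|[_ [L HL]]]; first by case: (Hz s (proj1 Hp)).
    exists c, (linl L) => m Hm y Hy; apply: (HL _ _ (Hc' m)) Hy => H; apply: Hm; exact: linl_in.
  + have Hc' : forall s, Rw s a -> Child a (inr s) s by move=> s Hs; right.
    split => //; first by move=> s Hs; exact: Hch (Hc' s Hs).
    case: Hc => [[Hz _]|[_ [L HL]]]; first by case: Hl => [[s Hs] _]; case: (Hz s).
    exists c, (linr L) => s Hs Hm y Hy; apply: (HL _ _ (Hc' s Hs)) Hy => H; apply: Hm; exact: linr_in.
Qed.

End B.

Section V.
Variables (K : fieldType) (T : wo).
Local Notation Rw := (@ext_lt T).
Local Notation Pt := (Pt T).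
Local Notation lab := (nat + option T)%type.
Local Notation D := (D K (T:=T)).
Local Notation B := (@B K T).
Local Notation V := (@V K T).

Lemma nz_lt a : ~ is_zero Rw a -> exists b, Rw b a.
Proof. move=> Hz; apply: NNPP => H; apply: Hz => b Hb; apply: H; by exists b. Qed.

Lemma V_uniq a g c d : V a g c -> V a g d -> c = d.
Proof.
case=> [[Hz E1]|[Hz [L1 H1]]]; case=> [[Hz' E2]|[Hz' [L2 H2]]]; try tauto.
- by rewrite -E1 -E2.
- have [b Hb] := nz_lt Hz.
  have [l [s [Hc Hin _]]] := child_fresh (L1 ++ L2) Hb.
  have [y Hy] := D_ne K s.
  rewrite -(H1 _ _ Hc _ _ Hy) ?(H2 _ _ Hc _ _ Hy) //; move=> H; apply: Hin; apply: List.in_or_app; tauto.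
Qed.

Lemma V_op (phi : K -> K -> K) a g h c d : V a g c -> V a h d ->
  V a (fun x => phi (g x) (h x)) (phi c d).
Proof.
case=> [[Hz E1]|[Hz [L1 H1]]]; case=> [[Hz' E2]|[Hz' [L2 H2]]]; try tauto.
- left; split => //; by rewrite E1 E2.
- right; split => //; exists (L1 ++ L2) => l s Hc Hin y Hy.
  rewrite (H1 _ _ Hc _ _ Hy) ?(H2 _ _ Hc _ _ Hy) //; move=> H; apply: Hin; apply: List.in_or_app; tauto.
Qed.

Lemma V_ext a g h c : (forall x, D a x -> g x = h x) -> V a g c -> V a h c.
Proof.
move=> E; case=> [[Hz E1]|[Hz [L1 H1]]].
- left; split => //; rewrite -E ?E1 //; exact: D_zero.
- right; split => //; exists L1 => l s Hc Hin y Hy; rewrite -E; first exact: H1 Hy.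
  by apply/(Child_D K _ Hc).
Qed.

Lemma V_zero a : V a (fun _ => 0) 0.
Proof.
case: (classic (is_zero Rw a)) => Hz; [by left|right; split => //; by exists [::]].
Qed.

Lemma V_const0 a g c : (forall x, D a x -> g x = 0) -> V a g c -> c = 0.
Proof.
move=> E Hc; apply: (V_uniq Hc); apply: (V_ext _ (V_zero a)) => x Hx; by rewrite E.
Qed.

Lemma V_ex a g : B a g -> exists c, V a g c.
Proof. by case/B_iff. Qed.

Lemma B_op (phi : K -> K -> K) a g h : phi 0 0 = 0 -> B a g -> B a h ->
  B a (fun x => phi (g x) (h x)).
Proof.
move=> H0; induction (ext_wf T a) as [a _ IH] in g, h |- * => Hg Hh.
move/B_iff: Hg => [Hg1 Hg2 [c Hc]]; move/B_iff: Hh => [Hh1 Hh2 [d Hd]].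
apply/B_iff; split.
- move=> x Hx; by rewrite Hg1 // Hh1.
- move=> l s Hc'; exact: (IH s (Child_lt Hc') _ _ (Hg2 _ _ Hc') (Hh2 _ _ Hc')).
- exists (phi c d); exact: V_op.
Qed.

Definition u a : Pt -> K := fun x => if excluded_middle_informative (D a x) then 1 else 0.

Lemma u_in a x : D a x -> u a x = 1.
Proof. by rewrite /u; case: excluded_middle_informative. Qed.
Lemma u_out a x : ~ D a x -> u a x = 0.
Proof. by rewrite /u; case: excluded_middle_informative. Qed.

Lemma u_restr a l s : Child a l s -> (fun y => u a (l :: y)) = u s.
Proof.
move=> Hc; apply: functional_extensionality => y.
case: (classic (D s y)) => Hy.
- by rewrite u_in ?u_in //; apply/(Child_D K _ Hc).
- by rewrite u_out ?u_out // => /(Child_D K _ Hc).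
Qed.

Lemma u_V a : V a (u a) 1.
Proof.
case: (classic (is_zero Rw a)) => Hz.
- left; split => //; apply: u_in; exact: D_zero.
- right; split => //; exists [::] => l s Hc _ y Hy; apply: u_in; by apply/(Child_D K _ Hc).
Qed.

Lemma u_B a : B a (u a).
Proof.
induction (ext_wf T a) as [a _ IH].
apply/B_iff; split.
- exact: u_out.
- move=> l s Hc; rewrite (u_restr Hc); exact: IH (Child_lt Hc).
- exists 1; exact: u_V.
Qed.

Lemma B0 a : B a (fun _ => 0).
Proof. exact: (B_op (phi := fun _ _ => 0) _ (u_B a) (u_B a)). Qed.

Lemma B_vanish a g x : B a g -> ~ D a x -> g x = 0.
Proof. by case/B_iff => H _ _; apply: H. Qed.

Lemma B_restr a g l s : B a g -> Child a l s -> B s (fun y => g (l :: y)).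
Proof. by case/B_iff => _ H _; apply: H. Qed.

Lemma u_mul a g : B a g -> (fun x => u a x * g x) = g.
Proof.
move=> Hg; apply: functional_extensionality => x.
case: (classic (D a x)) => Hx; first by rewrite u_in // mul1r.
by rewrite (B_vanish Hg Hx) mulr0.
Qed.

Inductive Node : option T -> Pt -> option T -> Prop :=
| Nroot a : Node a [::] a
| Nchild a l s p t : Child a l s -> Node s p t -> Node a (l :: p) t.

Lemma Node_le a p t : Node a p t -> t = a \/ Rw t a.
Proof.
elim=> [b|b l s q u Hc _ [E|H]]; [by left|right|right].
- subst; exact: Child_lt Hc.
- exact: Rw_trans H (Child_lt Hc).
Qed.

Lemma Node_lt a l p t : Node a (l :: p) t -> Rw t a.
Proof.
move=> H; inversion H as [|b l' s q u Hc Hn]; subst.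
case: (Node_le Hn) => [->|H']; [exact: Child_lt Hc|exact: Rw_trans H' (Child_lt Hc)].
Qed.

Lemma Node_nil a t : Node a [::] t -> t = a.
Proof. by move=> H; inversion H. Qed.

Lemma Node_det a p t t' : Node a p t -> Node a p t' -> t = t'.
Proof.
move=> H; elim: H t' => [b|b l s q u Hc _ IH] t' H'.
- exact: (esym (Node_nil H')).
- inversion H' as [|b' l' s' q' u' Hc' Hn']; subst; apply: IH; by rewrite (Child_det Hc Hc').
Qed.

Lemma Node_B a p t g : Node a p t -> B a g -> B t (fun y => g (p ++ y)).
Proof.
move=> H; elim: H g => [b|b l s q u Hc _ IH] g Hg //.
exact: (IH _ (B_restr Hg Hc)).
Qed.

Lemma Node_D a p t y : Node a p t -> D t y -> D a (p ++ y).
Proof.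
move=> H; elim: H y => [b|b l s q u Hc _ IH] y Hy //=.
apply/(Child_D K _ Hc); exact: IH.
Qed.

Lemma Node_ex a b : b = a \/ Rw b a -> exists p, Node a p b.
Proof.
induction (ext_wf T a) as [a _ IH] => [[->|Hba]]; first by exists [::]; constructor.
have [l [s [Hc _ Hsb]]] := child_fresh [::] Hba.
have [p Hp] : exists p, Node s p b.
  apply: IH; first exact: Child_lt Hc.
  case: (Rw_total b s) => [H|[H|H]]; tauto.
exists (l :: p); exact: Nchild Hc Hp.
Qed.

Lemma Leaf a x : D a x -> exists t, Node a x t /\ is_zero Rw t.
Proof.
elim: x a => [|l x IH] a /D_iff [[Hz E]|[l' [s [y [Hc E Hy]]]]] //.
- exists a; split => //; constructor.
- case: E => <- <- in Hc Hy; have [t [H1 H2]] := IH _ Hy.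
  exists t; split => //; exact: Nchild Hc H1.
Qed.

End V.

Section Gen.
Variables (K : fieldType) (X : Type).

Lemma fsum_cat (s1 s2 : seq (X -> K)) : fsum (s1 ++ s2) = fadd (fsum s1) (fsum s2).
Proof.
elim: s1 => [|g s1 IH] /=; apply: functional_extensionality => x.
- by rewrite /fadd /f0 add0r.
- by rewrite IH /fadd addrA.
Qed.

Definition DecP (A Zp : (X -> K) -> Prop) h :=
  exists gs z, [/\ (forall g, List.In g gs -> A g), Zp z & h = fadd (fsum gs) z].

Lemma DecP_sum (A Zp : (X -> K) -> Prop) : Zp f0 ->
  (forall f g, Zp f -> Zp g -> Zp (fadd f g)) ->
  forall hs, (forall h, List.In h hs -> DecP A Zp h) -> DecP A Zp (fsum hs).
Proof.
move=> Z0 ZD; elim=> [|h hs IH] Hhs /=.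
- exists [::], f0; split => //=; apply: functional_extensionality => x.
  by rewrite /fadd /f0 addr0.
- have [gs1 [z1 [H1 Hz1 E1]]] := Hhs h (or_introl erefl).
  have [gs2 [z2 [H2 Hz2 E2]]] := IH (fun h H => Hhs h (or_intror H)).
  exists (gs1 ++ gs2), (fadd z1 z2); split.
  + move=> g Hg; case: (List.in_app_or _ _ _ Hg) => ?; [exact: H1|exact: H2].
  + exact: ZD.
  + rewrite fsum_cat E1 E2; apply: functional_extensionality => x.
    rewrite /fadd; by rewrite addrACA.
Qed.

Fixpoint cd (A : Type) (P : A -> Prop) (L : list A) : list A :=
  match L with
  | [::] => [::]
  | x :: L => if excluded_middle_informative (P x /\ ~ List.In x L)
              then x :: cd P L else cd P L
  end.

Lemma cd_in (A : Type) (P : A -> Prop) L x : List.In x (cd P L) <-> List.In x L /\ P x.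
Proof.
elim: L => [|y L IH] /=; first tauto.
case: excluded_middle_informative => [[Py Hy]|Hn] /=; rewrite IH; split.
- case=> [<-|[]]; tauto.
- case=> [[<-|H] Px]; tauto.
- tauto.
- case=> [[E|H] Px]; last tauto.
  subst; split => //; apply: NNPP => H; apply: Hn; tauto.
Qed.

Lemma cd_nodup (A : Type) (P : A -> Prop) L : List.NoDup (cd P L).
Proof.
elim: L => [|y L IH] /=; first constructor.
case: excluded_middle_informative => [[Py Hy]|Hn] //.
constructor => // /cd_in; tauto.
Qed.

Lemma fsumE (s : seq (X -> K)) x : fsum s x = \sum_(g <- s) g x.
Proof. elim: s => [|g s IH] /=; by rewrite ?big_nil ?big_cons // /fadd IH. Qed.

End Gen.

Lemma fsum_map (K : fieldType) (X Y : Type) (F : (X -> K) -> (Y -> K)) :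
  F f0 = f0 -> (forall f g, F (fadd f g) = fadd (F f) (F g)) ->
  forall gs, F (fsum gs) = fsum (map F gs).
Proof. move=> F0 FD; elim=> [|g gs IH] //=; by rewrite FD IH. Qed.

Lemma DecP_map (K : fieldType) (X Y : Type) (F : (X -> K) -> (Y -> K)) (A Zp : (X -> K) -> Prop)
   (A' Zp' : (Y -> K) -> Prop) h :
  F f0 = f0 -> (forall f g, F (fadd f g) = fadd (F f) (F g)) ->
  (forall g, A g -> A' (F g)) -> (forall z, Zp z -> Zp' (F z)) ->
  DecP A Zp h -> DecP A' Zp' (F h).
Proof.
move=> F0 FD HA HZ [gs [z [H1 Hz E]]].
exists (map F gs), (F z); split.
- move=> g /List.in_map_iff [g' [<- Hg']]; exact: HA (H1 _ Hg').
- exact: HZ.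
- by rewrite E FD (fsum_map F0 FD).
Qed.


Section NV.
Variables (K : fieldType) (T : wo).
Local Notation Rw := (@ext_lt T).
Local Notation Pt := (Pt T).
Local Notation lab := (nat + option T)%type.
Local Notation D := (D K (T:=T)).
Local Notation B := (@B K T).
Local Notation V := (@V K T).
Local Notation Node := (@Node T).

Definition NV a (C : option T -> Prop) (g : Pt -> K) :=
  forall p t c, Node a p t -> C t -> V t (fun y => g (p ++ y)) c -> c = 0.

Lemma NV_unfold a C g : NV a C g <->
  (C a -> forall c, V a g c -> c = 0) /\
  forall l s, Child a l s -> NV s C (fun y => g (l :: y)).
Proof.
split.
- move=> H; split.
  + move=> Ca c Hc; exact: (H [::] a c (Nroot a)).
  + move=> l s Hc p t c Hn Ct Hv; exact: (H (l :: p) t c (Nchild Hc Hn)).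
- move=> [H1 H2] p t c Hn; inversion Hn as [b|b l s q u Hc Hn']; subst.
  + move=> Ca Hv; exact: H1 Ca _ Hv.
  + exact: (H2 _ _ Hc q t c Hn').
Qed.

Lemma NV_mono a (C C' : option T -> Prop) g : (forall t, C t -> C' t) ->
  NV a C' g -> NV a C g.
Proof. move=> HC H p t c Hn Ct; exact: H Hn (HC _ Ct). Qed.

Lemma NV_zero a C g : (forall x, D a x -> g x = 0) -> NV a C g.
Proof.
move=> H p t c Hn _; apply: V_const0 => y Hy; apply: H; exact: Node_D Hn Hy.
Qed.

Lemma node_val a p t g : Node a p t -> B a g -> exists c, V t (fun y => g (p ++ y)) c.
Proof. move=> Hn Hg; apply: V_ex; exact: Node_B Hn Hg. Qed.

Lemma NV_op (phi : K -> K -> K) a C g h : phi 0 0 = 0 -> B a g -> B a h ->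
  NV a C g -> NV a C h -> NV a C (fun x => phi (g x) (h x)).
Proof.
move=> H0 Hg Hh Ng Nh p t c Hn Ct Hv.
have [c1 H1] := node_val Hn Hg; have [c2 H2] := node_val Hn Hh.
have := V_op phi H1 H2; move/(V_uniq Hv) ->.
by rewrite (Ng _ _ _ Hn Ct H1) (Nh _ _ _ Hn Ct H2).
Qed.

Lemma NV_mull a C r g : B a r -> B a g -> NV a C g -> NV a C (fun x => r x * g x).
Proof.
move=> Hr Hg Ng p t c Hn Ct Hv.
have [c1 H1] := node_val Hn Hr; have [c2 H2] := node_val Hn Hg.
have := V_op (fun x y => x * y) H1 H2; move/(V_uniq Hv) ->.
by rewrite (Ng _ _ _ Hn Ct H2) mulr0.
Qed.

Definition ZC a C g := B a g /\ NV a C g.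

Lemma ZC_restr a C g l s : ZC a C g -> Child a l s -> ZC s C (fun y => g (l :: y)).
Proof.
move=> [Hg /NV_unfold [_ H]] Hc; split; [exact: B_restr Hg Hc|exact: H].
Qed.

Lemma ZC0 a C : ZC a C (fun _ => 0).
Proof. split; [exact: B0|exact: NV_zero]. Qed.

Lemma ZC_add a C f g : ZC a C f -> ZC a C g -> ZC a C (fadd f g).
Proof.
move=> [Hf Nf] [Hg Ng]; split.
- exact: (B_op (phi := fun x y => x + y)) (addr0 _) Hf Hg.
- exact: (NV_op (phi := fun x y => x + y)) (addr0 _) Hf Hg Nf Ng.
Qed.

Definition lift (l : lab) (h : Pt -> K) : Pt -> K := fun x =>
  match x with [::] => 0 | l' :: y => if excluded_middle_informative (l' = l) then h y else 0 end.

Lemma lift_eq l h y : lift l h (l :: y) = h y.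
Proof. by rewrite /lift; case: excluded_middle_informative. Qed.
Lemma lift_ne l l' h y : l' <> l -> lift l h (l' :: y) = 0.
Proof. by rewrite /lift; case: excluded_middle_informative. Qed.
Lemma lift_restr l h : (fun y => lift l h (l :: y)) = h.
Proof. apply: functional_extensionality => y; exact: lift_eq. Qed.
Lemma lift_restr_ne l l' h : l' <> l -> (fun y => lift l h (l' :: y)) = (fun _ => 0).
Proof. move=> H; apply: functional_extensionality => y; exact: lift_ne. Qed.

Lemma lift_V0 a l s h : Child a l s -> V a (lift l h) 0.
Proof.
move=> Hc; right; split; first exact: Child_nz Hc.
exists [:: l] => l' s' _ Hin y _; apply: lift_ne => E; apply: Hin; by left.
Qed.

Lemma lift_B a l s h : Child a l s -> B s h -> B a (lift l h).
Proof.
move=> Hc Hh; apply/B_iff; split.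
- case=> [//|l' y] Hn /=; case: excluded_middle_informative => // E; subst l'.
  apply: B_vanish Hh _ => Hy; apply: Hn; by apply/(Child_D K _ Hc).
- move=> l' s' Hc'; case: (classic (l' = l)) => E.
  + subst; rewrite lift_restr (Child_det Hc' Hc) //.
  + rewrite lift_restr_ne //; exact: B0.
- exists 0; exact: lift_V0 Hc.
Qed.

Lemma lift_NV a C l s h : Child a l s -> NV s C h -> NV a C (lift l h).
Proof.
move=> Hc Hh; apply/NV_unfold; split.
- move=> _ c Hv; exact: V_uniq Hv (lift_V0 _ Hc).
- move=> l' s' Hc'; case: (classic (l' = l)) => E.
  + subst; rewrite lift_restr (Child_det Hc' Hc) //.
  + rewrite lift_restr_ne //; exact: NV_zero.
Qed.

Lemma lift_ZC a C l s h : Child a l s -> ZC s C h -> ZC a C (lift l h).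
Proof. move=> Hc [H1 H2]; split; [exact: lift_B Hc H1|exact: lift_NV Hc H2]. Qed.

Lemma lift_f0 l : lift l f0 = f0.
Proof. apply: functional_extensionality => [[|l' y]] //=; rewrite /f0; by case: excluded_middle_informative. Qed.

Lemma lift_add l f g : lift l (fadd f g) = fadd (lift l f) (lift l g).
Proof.
apply: functional_extensionality => x; rewrite /fadd.
case: x => [|l' y] /=; first by rewrite addr0.
case: excluded_middle_informative => Hl //; by rewrite addr0.
Qed.

Definition RA a C g := [/\ B a g, ~ ZC a C g &
   forall r, B a r -> exists k, ZC a C (fun x => r x * g x - k * g x)].

Lemma lift_RA a C l s h : Child a l s -> RA s C h -> RA a C (lift l h).
Proof.
move=> Hc [Hb Hz Ha]; split.
- exact: lift_B Hc Hb.
- move=> H; apply: Hz; have := ZC_restr H Hc; by rewrite lift_restr.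
- move=> r Hr; have [k Hk] := Ha _ (B_restr Hr Hc); exists k.
  have -> : (fun x => r x * lift l h x - k * lift l h x) =
            lift l (fun y => r (l :: y) * h y - k * h y).
    apply: functional_extensionality => [[|l' y]] /=; first by rewrite !mulr0 subrr.
    destruct (excluded_middle_informative (l' = l)) as [E|E]; [by subst|by rewrite !mulr0 subrr].
  exact: lift_ZC Hc Hk.
Qed.

Lemma fsum_lift_nil (L : list lab) (hh : lab -> Pt -> K) :
  fsum (map (fun l => lift l (hh l)) L) [::] = 0.
Proof. elim: L => [//|l L IH] /=; by rewrite /fadd IH addr0. Qed.

Lemma fsum_lift_in (L : list lab) (hh : lab -> Pt -> K) l0 y :
  List.NoDup L -> List.In l0 L ->
  fsum (map (fun l => lift l (hh l)) L) (l0 :: y) = hh l0 y.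
Proof.
elim: L => [//|l L IH] Hnd /= Hin; rewrite /fadd.
inversion Hnd as [|l' L' Hl HL]; subst.
case: Hin => [E|Hin].
- subst; rewrite lift_eq.
  suff -> : fsum (map (fun l => lift l (hh l)) L) (l0 :: y) = 0 by rewrite addr0.
  elim: L Hl {HL IH Hnd} => [//|l' L IH'] Hl /=; rewrite /fadd lift_ne ?add0r.
  + apply: IH' => H; apply: Hl; by right.
  + move=> E; apply: Hl; by left.
- rewrite lift_ne ?add0r; [exact: IH|by move=> E; subst].
Qed.

Lemma fsum_lift_out (L : list lab) (hh : lab -> Pt -> K) l0 y :
  ~ List.In l0 L -> fsum (map (fun l => lift l (hh l)) L) (l0 :: y) = 0.
Proof.
elim: L => [//|l L IH] Hin /=; rewrite /fadd lift_ne ?add0r.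
- apply: IH => H; apply: Hin; by right.
- move=> E; apply: Hin; by left.
Qed.

Lemma children_sum a g L : ~ is_zero Rw a -> B a g ->
  (forall l s, Child a l s -> ~ List.In l L -> forall y, D s y -> g (l :: y) = 0) ->
  g = fsum (map (fun l => lift l (fun y => g (l :: y)))
                (cd (fun l => exists s, Child a l s) L)).
Proof.
move=> Hz Hg HL; apply: functional_extensionality => [[|l0 y]].
- by rewrite fsum_lift_nil (B_vanish Hg (D_nil (K:=K) Hz)).
- case: (classic (List.In l0 (cd (fun l => exists s, Child a l s) L))) => Hin.
  + rewrite (@fsum_lift_in _ (fun l y => g (l :: y))) //; exact: cd_nodup.
  + rewrite fsum_lift_out //.
    case: (classic (D a (l0 :: y))) => Hd; last exact: B_vanish Hg Hd.
    move/D_iff: Hd => [[//]|[l [s [y' [Hc E Hy]]]]]; case: E => ? ?; subst.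
    eapply HL; [exact Hc| |exact Hy]; move=> H; apply: Hin; apply/cd_in; split; [done|by exists s].
Qed.

Lemma V_nz_root a g c : V a g c -> ~ is_zero Rw a ->
  exists L, forall l s, Child a l s -> ~ List.In l L -> forall y, D s y -> g (l :: y) = c.
Proof. by case=> [[Hz _] //|[_ H]]. Qed.

Lemma only_root a p t : Node a p t -> ~ Rw t a -> p = [::] /\ t = a.
Proof.
case: p => [|l p] Hn Ht.
- by rewrite (Node_nil Hn).
- by case: Ht; exact: Node_lt Hn.
Qed.

Section Dec.
Variable beta : option T.
Local Notation Cb := (fun t => ~ Rw t beta).
Local Notation Cb' := (fun t => Rw beta t).

Lemma Dec a g : B a g -> NV a Cb' g -> DecP (RA a Cb) (ZC a Cb) g.
Proof.
induction (ext_wf T a) as [a _ IH] in g |- * => Hg Hnv.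
case: (Rw_total a beta) => [Hab|[Eab|Hba]].
- exists [::], g; split => //.
  + split => // p t c Hn Ct; case: (Node_le Hn) => [E|H]; subst.
    * by case: Ct.
    * by case: Ct; exact: Rw_trans H Hab.
  + apply: functional_extensionality => x; by rewrite /fadd /f0 add0r.
- subst beta; have [c Hc] := V_ex Hg.
  case: (classic (c = 0)) => Hc0.
  + exists [::], g; split => //.
    * split => // p t c' Hn Ct Hv; have [E1 E2] := only_root Hn Ct; subst.
      exact: V_uniq Hv Hc.
    * apply: functional_extensionality => x; by rewrite /fadd /f0 add0r.
  + exists [:: g], f0; split.
    * move=> g' [<-|//]; split => //.
      -- move=> [_ H]; apply: Hc0; exact: (H [::] a c (Nroot a) (@Rw_irr T a) Hc).
      -- move=> r Hr; have [k Hk] := V_ex Hr; exists k; split.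
         ++ apply: (B_op (phi := fun x y => x * y - k * y)) _ Hr Hg; by rewrite !mulr0 subr0.
         ++ move=> p t c' Hn Ct Hv; have [E1 E2] := only_root Hn Ct; subst.
            have := V_op (fun x y => x * y - k * y) Hk Hc; move/(V_uniq Hv) ->.
            by rewrite subrr.
    * exact: ZC0.
    * apply: functional_extensionality => x; by rewrite /fsum /= /fadd /f0 !addr0.
- have Hz : ~ is_zero Rw a by move=> H; exact: H _ Hba.
  have [c Hc] := V_ex Hg.
  have Ec : c = 0 by move/NV_unfold: Hnv => [H _]; exact: H Hba _ Hc.
  subst c; have [L HL] := V_nz_root Hc Hz.
  rewrite (children_sum Hz Hg HL).
  apply: DecP_sum; [exact: ZC0|exact: ZC_add|].
  move=> h /List.in_map_iff [l [<- /cd_in [_ [s Hcs]]]].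
  apply: (DecP_map (F := lift l)); [exact: lift_f0|exact: lift_add| | |].
  + move=> g'; exact: lift_RA Hcs.
  + move=> z; exact: lift_ZC Hcs.
  + apply: IH; [exact: Child_lt Hcs|exact: B_restr Hg Hcs|].
    by move/NV_unfold: Hnv => [_ H]; apply: H.
Qed.

End Dec.

End NV.

Section S.
Variables (K : fieldType) (T : wo).
Local Notation Rw := (@ext_lt T).
Local Notation Pt := (Pt T).
Local Notation lab := (nat + option T)%type.
Local Notation D := (D K (T:=T)).
Local Notation B := (@B K T).
Local Notation V := (@V K T).
Local Notation Node := (@Node T).
Local Notation NV := (@NV K T).
Local Notation ZC := (@ZC K T).

Lemma u_idem (a : option T) x : u K a x * u K a x = u K a x.
Proof. rewrite /u; case: excluded_middle_informative => Hemi; by rewrite ?mulr1 ?mulr0. Qed.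

Lemma V_const a (c : K) : V a (fun _ => c) c.
Proof.
case: (classic (is_zero Rw a)) => Hz; [by left|right; split => //; by exists [::]].
Qed.

Section Split.
Variable beta : option T.
Local Notation Cb := (fun t => ~ Rw t beta).
Local Notation Cb' := (fun t => Rw beta t).

Lemma Split a g : B a g -> ~ NV a Cb' g ->
  exists e1 e2, [/\ B a e1, B a e2,
     (forall x, e1 x * e1 x = e1 x /\ e1 x * e2 x = 0),
     ~ ZC a Cb (fun x => g x * e1 x) & ~ ZC a Cb (fun x => g x * e2 x)].
Proof.
induction (ext_wf T a) as [a _ IH] in g |- * => Hg Hnv.
case: (classic (forall l s, Child a l s -> NV s Cb' (fun y => g (l :: y)))) => Hch.
- have [Hba [c [Hc Hc0]]] : Rw beta a /\ exists c, V a g c /\ c <> 0.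
    apply: NNPP => H; apply: Hnv; apply/NV_unfold; split => // Hba c Hc.
    apply: NNPP => Hc0; apply: H; split => //; by exists c.
  have Hz : ~ is_zero Rw a by move=> H; exact: H _ Hba.
  have [L HL] := V_nz_root Hc Hz.
  have [l1 [s1 [Hc1 Hin1 Hs1]]] := child_fresh L Hba.
  have [l2 [s2 [Hc2 Hin2 Hs2]]] := child_fresh (l1 :: L) Hba.
  have Hne : l2 <> l1 by move=> E; apply: Hin2; left.
  have notZ : forall l s, Child a l s -> ~ List.In l L -> ~ Rw s beta ->
      ~ ZC a Cb (fun x => g x * lift l (u K s) x).
    move=> l s Hcl Hinl Hsl HZ.
    have [_ HN] := ZC_restr HZ Hcl.
    have E : (fun y => g (l :: y) * lift l (u K s) (l :: y)) = (fun y => g (l :: y) * u K s y).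
      apply: functional_extensionality => y; by rewrite lift_eq.
    rewrite E in HN; apply: Hc0.
    apply: (HN [::] s c (Nroot s) Hsl).
    apply: V_ext (V_const s c) => y Hy; by rewrite u_in // (HL _ _ Hcl Hinl _ Hy) mulr1.
  exists (lift l1 (u K s1)), (lift l2 (u K s2)); split.
  + exact: lift_B Hc1 (u_B K s1).
  + exact: lift_B Hc2 (u_B K s2).
  + case=> [|l y] /=; first by rewrite mulr0.
    split; first by case: excluded_middle_informative => Hemi; by rewrite ?u_idem ?mulr0.
    case: excluded_middle_informative => E1; last by rewrite mul0r.
    case: excluded_middle_informative => E2; last by rewrite mulr0.
    by case: Hne; subst.
  + exact: notZ Hc1 Hin1 Hs1.
  + apply: notZ Hc2 _ Hs2 => H; apply: Hin2; by right.
- have [l [s [Hcl HN]]] : exists l s, Child a l s /\ ~ NV s Cb' (fun y => g (l :: y)).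
    apply: NNPP => H; apply: Hch => l s Hcl; apply: NNPP => HN; apply: H; by exists l, s.
  have [e1 [e2 [He1 He2 Hio Hz1 Hz2]]] := IH s (Child_lt Hcl) _ (B_restr Hg Hcl) HN.
  have notZ : forall e, ~ ZC s Cb (fun y => g (l :: y) * e y) ->
      ~ ZC a Cb (fun x => g x * lift l e x).
    move=> e He HZ; apply: He; have := ZC_restr HZ Hcl.
    have -> // : (fun y => g (l :: y) * lift l e (l :: y)) = (fun y => g (l :: y) * e y).
    apply: functional_extensionality => y; by rewrite lift_eq.
  exists (lift l e1), (lift l e2); split.
  + exact: lift_B Hcl He1.
  + exact: lift_B Hcl He2.
  + case=> [|l' y] /=; first by rewrite mulr0.
    case: excluded_middle_informative => Hemi; last by rewrite mulr0.
    exact: Hio.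
  + exact: notZ Hz1.
  + exact: notZ Hz2.
Qed.

Lemma Fin a g : B a g -> NV a Cb' g ->
  exists Lp : list Pt, forall p c, Node a p beta ->
     V beta (fun y => g (p ++ y)) c -> c <> 0 -> List.In p Lp.
Proof.
induction (ext_wf T a) as [a _ IH] in g |- * => Hg Hnv.
case: (Rw_total a beta) => [Hab|[Eab|Hba]].
- exists [::] => p c Hn; case: (Node_le Hn) => [E|H].
  + subst; by case: (Rw_irr Hab).
  + by case: (Rw_asym H Hab).
- subst; exists [:: [::]] => p c Hn _ _; have [-> _] := only_root Hn (@Rw_irr T beta); by left.
- have Hz : ~ is_zero Rw a by move=> H; exact: H _ Hba.
  have [c Hc] := V_ex Hg.
  have Ec : c = 0 by move/NV_unfold: Hnv => [H _]; exact: H Hba _ Hc.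
  subst c; have [L HL] := V_nz_root Hc Hz.
  have [Lp HLp] : exists Lp, forall l s p c, List.In l L -> Child a l s -> Node s p beta ->
      V beta (fun y => g (l :: p ++ y)) c -> c <> 0 -> List.In (l :: p) Lp.
    elim: L {HL} => [|l0 L0 [Lp0 H0]]; first by exists [::].
    case: (classic (exists s, Child a l0 s)) => [[s0 Hc0]|Hnc].
    + have [Lq Hq] := IH s0 (Child_lt Hc0) _ (B_restr Hg Hc0)
          (proj2 (proj1 (NV_unfold _ _ _) Hnv) _ _ Hc0).
      exists (map (cons l0) Lq ++ Lp0) => l s p c [E|Hin] Hcl Hn Hv Hc'; apply: List.in_or_app.
      * subst l; rewrite (Child_det Hcl Hc0) in Hn; left; apply: List.in_map.
        exact: Hq Hn Hv Hc'.
      * right; exact: H0 Hin Hcl Hn Hv Hc'.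
    + exists Lp0 => l s p c [E|Hin] Hcl Hn Hv Hc'.
      * subst; case: Hnc; by exists s.
      * exact: H0 Hin Hcl Hn Hv Hc'.
  exists Lp => p c Hn Hv Hc'.
  inversion Hn as [b|b l s q t Hcl Hn']; subst.
  + by case: (Rw_irr Hba).
  + case: (classic (List.In l L)) => HinL; first exact: HLp HinL Hcl Hn' Hv Hc'.
    case: Hc'; apply: V_const0 Hv => y Hy; apply: (HL _ _ Hcl HinL).
    exact: Node_D Hn' Hy.
Qed.

End Split.

Lemma lim_combine (A : Type) t (Q : A -> option T -> Prop) :
  is_limit Rw t -> (forall x s s', Q x s -> s = s' \/ Rw s s' -> Q x s') ->
  forall L : list A, (forall x, List.In x L -> exists s, Rw s t /\ Q x s) ->
  exists s, Rw s t /\ forall x, List.In x L -> Q x s.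
Proof.
move=> Hl Hm; elim=> [|x L IH] H.
- case: Hl => [[s Hs] _]; by exists s.
- have [s1 [Hs1 Q1]] := IH (fun y Hy => H y (or_intror Hy)).
  have [s2 [Hs2 Q2]] := H x (or_introl erefl).
  case: (Rw_total s1 s2) => [H12|[E|H21]].
  + exists s2; split => // y [<-//|Hy]; apply: Hm (Q1 _ Hy) _; by right.
  + subst; exists s2; split => // y [<-//|Hy]; exact: Q1.
  + exists s1; split => // y [<-|Hy]; [apply: Hm Q2 _; by right|exact: Q1].
Qed.

Lemma Lim a t g : is_limit Rw t -> B a g -> NV a (fun v => ~ Rw v t) g ->
  exists s, Rw s t /\ NV a (fun v => ~ Rw v s) g.
Proof.
move=> Hl; induction (ext_wf T a) as [a _ IH] in g |- * => Hg Hnv.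
case: (classic (Rw a t)) => Hat.
- have [s [Has Hst]] := limit_between Hl Hat.
  exists s; split => // p v c Hn Cv; case: Cv; case: (Node_le Hn) => [->//|H].
  exact: Rw_trans H Has.
- have Hz : ~ is_zero Rw a.
    move=> H; case: Hl => [[w Hw] _]; apply: (H w).
    case: (Rw_total a t) => [//|[E|H']]; [by subst|exact: Rw_trans Hw H'].
  have [c Hc] := V_ex Hg.
  have Ec : c = 0 by move/NV_unfold: Hnv => [H _]; exact: H Hat _ Hc.
  subst c; have [L HL] := V_nz_root Hc Hz.
  have Hm : forall l s s', (forall s0, Child a l s0 -> NV s0 (fun v => ~ Rw v s) (fun y => g (l :: y))) ->
      s = s' \/ Rw s s' -> forall s0, Child a l s0 -> NV s0 (fun v => ~ Rw v s') (fun y => g (l :: y)).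
    move=> l s s' H Hss' s0 Hc0; apply: NV_mono (H _ Hc0) => v Hv Hvs; apply: Hv.
    case: Hss' => [<-//|H']; exact: Rw_trans Hvs H'.
  have Hall : forall l, List.In l L -> exists s, Rw s t /\
      forall s0, Child a l s0 -> NV s0 (fun v => ~ Rw v s) (fun y => g (l :: y)).
    move=> l _.
    case: (classic (exists s0, Child a l s0)) => [[s0 Hc0]|Hnc].
    + have [s [Hst Hs]] := IH s0 (Child_lt Hc0) _ (B_restr Hg Hc0)
          (proj2 (proj1 (NV_unfold _ _ _) Hnv) _ _ Hc0).
      exists s; split => // s1 Hc1; by rewrite (Child_det Hc1 Hc0).
    + case: Hl => [[s Hs] _]; exists s; split => // s1 Hc1; case: Hnc; by exists s1.
  have [s [Hst Hs]] := lim_combine Hl Hm Hall.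
  exists s; split => //.
  apply/NV_unfold; split.
  + move=> _ c Hv; exact: V_uniq Hv Hc.
  + move=> l s0 Hc0; case: (classic (List.In l L)) => Hin; first exact: Hs Hin _ Hc0.
    apply: NV_zero => y Hy; exact: HL Hc0 Hin _ Hy.
Qed.

Definition ind (p : Pt) (t : option T) : Pt -> K := fun x =>
  if excluded_middle_informative (exists y, x = p ++ y /\ D t y) then 1 else 0.

Lemma ind_nil t : ind [::] t = u K t.
Proof.
apply: functional_extensionality => x; rewrite /ind /u.
case: excluded_middle_informative => [[y [E Hy]]|H1]; case: excluded_middle_informative => H2 //.
- by case: H2; subst.
- by case: H1; exists x.
Qed.

Lemma ind_cons l p t : ind (l :: p) t = lift l (ind p t).
Proof.
apply: functional_extensionality => x; rewrite /ind /lift.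
case: x => [|l' x];
repeat (let H := fresh "H" in match goal with |- context [excluded_middle_informative ?P] =>
   destruct (excluded_middle_informative P) as [H|H] end); try reflexivity; exfalso.
all: try (case: H => y [E _]; discriminate).
all: try (case: H => y [E Hy]; case: E => E1 E2; subst; apply: H1; by exists y).
all: try (case: H => y [E Hy]; case: E => E1 E2; subst; by apply: H0).
all: try (case: H1 => y [E Hy]; subst; apply: H; by exists y).
all: try (case: H0 => y [E Hy]; subst; apply: H; by exists y).
Qed.

Lemma ind_B a p t : Node a p t -> B a (ind p t).
Proof.
elim=> [b|b l s q v Hc _ IH]; first by rewrite ind_nil; exact: u_B.
rewrite ind_cons; exact: lift_B Hc IH.
Qed.

Lemma ind_val a p0 beta : Node a p0 beta -> forall p t c, Node a p t -> ~ Rw t beta ->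
  V t (fun y => ind p0 beta (p ++ y)) c -> (p = p0 -> c = 1) /\ (p <> p0 -> c = 0).
Proof.
elim=> [b|b l0 s0 q0 v Hc0 Hn0 IH] p t c Hn Ht Hv.
- have [E1 E2] := only_root Hn Ht; subst; split => // _.
  rewrite ind_nil in Hv; exact: V_uniq Hv (u_V K b).
- inversion Hn as [b'|b' l s q t' Hc Hn']; subst.
  + have E : c = 0 by apply: V_uniq Hv _; rewrite ind_cons; exact: lift_V0 Hc0.
    by split.
  + case: (classic (l = l0)) => El.
    * subst l; rewrite (Child_det Hc Hc0) in Hn'.
      have E : (fun y => ind (l0 :: q0) v ((l0 :: q) ++ y)) = (fun y => ind q0 v (q ++ y)).
        apply: functional_extensionality => y; by rewrite ind_cons cat_cons lift_eq.
      rewrite E in Hv; have [H1 H2] := IH _ _ _ Hn' Ht Hv.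
      split => H; [apply: H1; by case: H|apply: H2 => H'; apply: H; by subst].
    * have E : (fun y => ind (l0 :: q0) v ((l :: q) ++ y)) = (fun _ => 0).
        apply: functional_extensionality => y; by rewrite ind_cons cat_cons lift_ne.
      rewrite E in Hv; have Ec := V_uniq Hv (V_zero K t); split => // Hp; case: El; by case: Hp.
Qed.

End S.

Section Ring.
Variables (K : fieldType) (X : Type).
Variable P : fpred K X.
Hypothesis HP : is_falg P.

Lemma fext (f g : X -> K) : (forall x, f x = g x) -> f = g.
Proof. exact: functional_extensionality. Qed.

Lemma unit_ex : exists e, P e /\ forall f, P f -> fmul e f = f.
Proof. by case: HP => _ [_ _ _ _ H]. Qed.

Lemma P_scale k f : P f -> P (fscale k f).
Proof. by case: HP => _ [_ _ _ H _]; apply: H. Qed.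

Section Ideal.
Variable I : fpred K X.
Hypothesis HI : is_ideal P I.

Lemma I_P f : I f -> P f. Proof. by case: HI => H _ _ _ _; apply: H. Qed.
Lemma I_0 : I f0. Proof. by case: HI. Qed.
Lemma I_add f g : I f -> I g -> I (fadd f g). Proof. by case: HI => _ _ H _ _; apply: H. Qed.
Lemma I_opp f : I f -> I (fopp f). Proof. by case: HI => _ _ _ H _; apply: H. Qed.
Lemma I_mul r f : P r -> I f -> I (fmul r f). Proof. by case: HI => _ _ _ _ H; apply: H. Qed.
Lemma I_mulr r f : P r -> I f -> I (fmul f r).
Proof.
move=> Hr Hf; have -> : fmul f r = fmul r f by apply: functional_extensionality => x; rewrite /fmul mulrC.
exact: I_mul.
Qed.
Lemma I_scale k f : I f -> I (fscale k f).
Proof.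
move=> Hf; have [e [He He']] := unit_ex.
have <- : fmul (fscale k e) f = fscale k f.
  rewrite -{2}(He' _ (I_P Hf)); apply: functional_extensionality => x; by rewrite /fmul /fscale mulrA.
apply: I_mul => //; exact: P_scale.
Qed.
Lemma I_sub f g : I f -> I g -> I (fadd f (fopp g)).
Proof. move=> Hf Hg; apply: I_add => //; exact: I_opp. Qed.

End Ideal.


Lemma falg_ideal : is_ideal P P.
Proof. by case: HP => H0 [H1 H2 H3 _ _]; split => // r f Hr Hf; apply: H3. Qed.

Section Minimal.
Variable I : fpred K X.
Hypothesis HI : is_ideal P I.

Definition Mg (g : X -> K) : fpred K X := fun h => P h /\ exists k, I (fadd h (fopp (fscale k g))).

Lemma atom_minimal g : P g -> ~ I g ->
  (forall r, P r -> exists k, I (fadd (fmul r g) (fopp (fscale k g)))) ->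
  minimal_over P I (Mg g) /\ Mg g g.
Proof.
move=> Hg HnI Hat.
have Mgg : Mg g g.
  split => //; exists 1; have -> : fadd g (fopp (fscale 1 g)) = f0.
    by apply: functional_extensionality => x; rewrite /fadd /fopp /fscale /f0 mul1r subrr.
  exact: I_0 HI.
have HM : is_ideal P (Mg g).
  split.
  - by move=> f [].
  - split; first by case: HP.
    exists 0; have -> : fadd f0 (fopp (fscale 0 g)) = f0.
      by apply: functional_extensionality => x; rewrite /fadd /fopp /fscale /f0 mul0r oppr0 addr0.
    exact: I_0 HI.
  - move=> f h [Hf [k1 H1]] [Hh [k2 H2]]; split; first by case: HP => _ [H _ _ _ _]; apply: H.
    exists (k1 + k2).
    have -> : fadd (fadd f h) (fopp (fscale (k1 + k2) g)) =
              fadd (fadd f (fopp (fscale k1 g))) (fadd h (fopp (fscale k2 g))).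
      apply: functional_extensionality => x; rewrite /fadd /fopp /fscale mulrDl opprD.
      by rewrite -!addrA; congr (_ + _); rewrite addrCA.
    exact: (I_add HI H1 H2).
  - move=> f [Hf [k H]]; split; first by case: HP => _ [_ H' _ _ _]; apply: H'.
    exists (- k).
    have -> : fadd (fopp f) (fopp (fscale (- k) g)) = fopp (fadd f (fopp (fscale k g))).
      by apply: functional_extensionality => x; rewrite /fadd /fopp /fscale mulNr opprD.
    exact: (I_opp HI H).
  - move=> r f Hr [Hf [k H]]; split; first by case: HP => _ [_ _ H' _ _]; apply: H'.
    have [kr Hkr] := Hat r Hr.
    exists (k * kr).
    have -> : fadd (fmul r f) (fopp (fscale (k * kr) g)) =
       fadd (fmul r (fadd f (fopp (fscale k g)))) (fscale k (fadd (fmul r g) (fopp (fscale kr g)))).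
      apply: functional_extensionality => x; rewrite /fadd /fopp /fscale /fmul; ring.
    exact: (I_add HI (I_mul HI Hr H) (I_scale HI _ Hkr)).
split => //; split => //.
- move=> f Hf; split; first by case: HI => H _ _ _ _; apply: H.
  exists 0; have -> // : fadd f (fopp (fscale 0 g)) = f.
  by apply: functional_extensionality => x; rewrite /fadd /fopp /fscale mul0r oppr0 addr0.
- by exists g.
- move=> N HN HIN HNM.
  case: (classic (forall f, N f -> I f)) => Hall.
  + left => f; split; [exact: Hall|exact: HIN].
  + right; have [h [Nh nIh]] : exists h, N h /\ ~ I h.
      apply: NNPP => H; apply: Hall => f Nf; apply: NNPP => nIf; apply: H; by exists f.
    have [_ [k Hk]] := HNM _ Nh.
    have k0 : k != 0.
      apply/negP => /eqP E; subst k; apply: nIh.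
      have <- // : fadd h (fopp (fscale 0 g)) = h.
      by apply: functional_extensionality => x; rewrite /fadd /fopp /fscale mul0r oppr0 addr0.
    have Ng : N g.
      have E : g = fscale k^-1 (fadd h (fopp (fadd h (fopp (fscale k g))))).
        apply: functional_extensionality => x; rewrite /fadd /fopp /fscale opprD opprK addrA subrr add0r.
        by rewrite mulrA mulVf // mul1r.
      rewrite E; apply: (I_scale HN); apply: (I_sub HN) => //; exact: HIN.
    move=> f; split; first exact: HNM.
    move=> [Hf [kf Hkf]].
    have -> : f = fadd (fadd f (fopp (fscale kf g))) (fscale kf g).
      by apply: functional_extensionality => x; rewrite /fadd /fopp addrNK.
    apply: (I_add HN); first exact: HIN.
    exact: (I_scale HN).
Qed.

Lemma minimal_split M g e1 e2 : minimal_over P I M -> M g -> P e1 -> P e2 ->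
  (forall x, e1 x * e1 x = e1 x /\ e1 x * e2 x = 0) ->
  ~ I (fmul g e1) -> ~ I (fmul g e2) -> False.
Proof.
move=> [HM HIM _ Hmin] Mg' He1 He2 Hee nI1 nI2.
pose N : fpred K X := fun h => M h /\ I (fadd h (fopp (fmul h e1))).
have HN : is_ideal P N.
  split.
  - move=> f [Mf _]; by case: HM => H _ _ _ _; apply: H.
  - split; first exact: I_0 HM.
    have -> : fadd f0 (fopp (fmul f0 e1)) = f0.
      by apply: functional_extensionality => x; rewrite /fadd /fopp /fmul /f0 mul0r oppr0 addr0.
    exact: I_0 HI.
  - move=> f h [Mf If] [Mh Ih]; split; first exact: (I_add HM Mf Mh).
    have -> : fadd (fadd f h) (fopp (fmul (fadd f h) e1)) =
       fadd (fadd f (fopp (fmul f e1))) (fadd h (fopp (fmul h e1))).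
      apply: functional_extensionality => x; rewrite /fadd /fopp /fmul mulrDl opprD.
      by rewrite -!addrA; congr (_ + _); rewrite addrCA.
    exact: (I_add HI If Ih).
  - move=> f [Mf If]; split; first exact: (I_opp HM Mf).
    have -> : fadd (fopp f) (fopp (fmul (fopp f) e1)) = fopp (fadd f (fopp (fmul f e1))).
      by apply: functional_extensionality => x; rewrite /fadd /fopp /fmul mulNr opprD.
    exact: (I_opp HI If).
  - move=> r f Hr [Mf If]; split; first exact: (I_mul HM Hr Mf).
    have -> : fadd (fmul r f) (fopp (fmul (fmul r f) e1)) = fmul r (fadd f (fopp (fmul f e1))).
      by apply: functional_extensionality => x; rewrite /fadd /fopp /fmul mulrDr mulrN mulrA.
    exact: (I_mul HI Hr If).
have Hge1 : M (fmul g e1).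
  have -> : fmul g e1 = fmul e1 g by apply: functional_extensionality => x; rewrite /fmul mulrC.
  exact: (I_mul HM He1 Mg').
have Hge2 : M (fmul g e2).
  have -> : fmul g e2 = fmul e2 g by apply: functional_extensionality => x; rewrite /fmul mulrC.
  exact: (I_mul HM He2 Mg').
case: (Hmin N HN) => [f If|f [Mf _] //|HNI|HNM].
- split; first exact: HIM.
  apply: (I_sub HI If); exact: (I_mulr HI He1 If).
- apply: nI1; apply/(HNI _); split => //.
  have -> : fadd (fmul g e1) (fopp (fmul (fmul g e1) e1)) = f0.
    apply: functional_extensionality => x; rewrite /fadd /fopp /fmul /f0 -mulrA.
    by case: (Hee x) => -> _; rewrite subrr.
  exact: I_0 HI.
- apply: nI2; have [_ H] := proj2 (HNM _) Hge2.
  have <- // : fadd (fmul g e2) (fopp (fmul (fmul g e2) e1)) = fmul g e2.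
  apply: functional_extensionality => x; rewrite /fadd /fopp /fmul -mulrA (mulrC (e2 x)).
  by case: (Hee x) => _ ->; rewrite mulr0 oppr0 addr0.
Qed.

Lemma soc_sub (J : fpred K X) : is_ideal P J -> fsubset I J ->
  (forall M, minimal_over P I M -> fsubset M J) -> fsubset (soc_next P I) J.
Proof.
move=> HJ HIJ HMJ f [Pf [gs [Hgs Hr]]].
have Js : J (fsum gs).
  elim: gs Hgs {Hr} => [|g gs IH] Hgs /=; first exact: I_0 HJ.
  apply: (I_add HJ); last by apply: IH => g' Hg'; apply: Hgs; right.
  have [M [HM Mg']] := Hgs g (or_introl erefl); exact: HMJ HM _ Mg'.
have -> : f = fadd (fadd f (fopp (fsum gs))) (fsum gs).
  by apply: functional_extensionality => x; rewrite /fadd /fopp addrNK.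
apply: (I_add HJ) => //; exact: HIJ.
Qed.

Lemma soc_sup f (A : fpred K X) :
  (forall g, A g -> exists M, minimal_over P I M /\ M g) ->
  P f -> DecP A I f -> soc_next P I f.
Proof.
move=> HA Pf [gs [z [Hgs Hz E]]]; split => //; exists gs; split.
- move=> g Hg; exact: HA (Hgs _ Hg).
- have -> // : fadd f (fopp (fsum gs)) = z.
  by rewrite E; apply: functional_extensionality => x; rewrite /fadd /fopp addrC addKr.
Qed.

End Minimal.
End Ring.

Section Glob.
Variables (K : fieldType) (T : wo) (n : nat).
Local Notation Rw := (@ext_lt T).
Local Notation Pt := (Pt T).
Local Notation X := ('I_n * Pt)%type.
Local Notation D := (D K (T:=T)).
Local Notation B := (@B K T).
Local Notation V := (@V K T).
Local Notation Node := (@Node T).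
Local Notation NV := (@NV K T).
Local Notation ZC := (@ZC K T).
Local Notation Bn := (Bn K T n).

Definition fi (f : X -> K) (i : 'I_n) : Pt -> K := fun x => f (i, x).
Definition Zg (C : option T -> Prop) (f : X -> K) := Bn f /\ forall i, NV None C (fi f i).
Definition gl (i : 'I_n) (h : Pt -> K) : X -> K := fun ix => if ix.1 == i then h ix.2 else 0.

Lemma Bn_B f i : Bn f -> B None (fi f i).
Proof. by move=> H; exact: H i. Qed.

Lemma Bn_op (phi : K -> K -> K) f g : phi 0 0 = 0 -> Bn f -> Bn g ->
  Bn (fun x => phi (f x) (g x)).
Proof. move=> H0 Hf Hg i; exact: (B_op (phi := phi)) H0 (Hf i) (Hg i). Qed.

Lemma fi_gl i j h : fi (gl i h) j = if j == i then h else (fun _ => 0).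
Proof.
apply: functional_extensionality => x; rewrite /fi /gl /=; by case: (j == i).
Qed.

Lemma gl_B i h : B None h -> Bn (gl i h).
Proof.
move=> Hh j; have := fi_gl i j h; rewrite /fi => ->.
case: (j == i) => //; exact: B0.
Qed.

Lemma Bn_falg : is_falg Bn.
Proof.
split; first by move=> i; exact: B0.
split.
- move=> f g Hf Hg; exact: (Bn_op (phi := fun x y => x + y) (addr0 _) Hf Hg).
- move=> f Hf; exact: (Bn_op (phi := fun x _ => - x) (oppr0 _) Hf Hf).
- move=> f g Hf Hg; exact: (Bn_op (phi := fun x y => x * y) (mulr0 _) Hf Hg).
- move=> k f Hf; exact: (Bn_op (phi := fun x _ => k * x) (mulr0 _) Hf Hf).
- exists (fun ix => u K None ix.2); split; first by move=> i; exact: u_B.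
  move=> f Hf; apply: functional_extensionality => [[i x]].
  have := u_mul (Hf i); move/(congr1 (fun F => F x)); by rewrite /fmul.
Qed.

Lemma Bn_vN : vN_regular Bn.
Proof.
move=> a Ha; exists (fun x => (a x)^-1); split.
- exact: (Bn_op (phi := fun x _ => x^-1) (invr0 _) Ha Ha).
- apply: functional_extensionality => x; rewrite /fmul.
  case: (eqVneq (a x) 0) => [->|H]; first by rewrite !mul0r.
  by rewrite mulfV // mul1r.
Qed.

Lemma Zg_ideal C : is_ideal Bn (Zg C).
Proof.
split.
- by move=> f [].
- split; first by move=> i; exact: B0.
  move=> i; exact: NV_zero.
- move=> f g [Hf Nf] [Hg Ng]; split.
  + exact: (Bn_op (phi := fun x y => x + y) (addr0 _) Hf Hg).
  + move=> i; exact: (NV_op (phi := fun x y => x + y) (addr0 _) (Hf i) (Hg i) (Nf i) (Ng i)).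
- move=> f [Hf Nf]; split.
  + exact: (Bn_op (phi := fun x _ => - x) (oppr0 _) Hf Hf).
  + move=> i; exact: (NV_op (phi := fun x _ => - x) (oppr0 _) (Hf i) (Hf i) (Nf i) (Nf i)).
- move=> r f Hr [Hf Nf]; split.
  + exact: (Bn_op (phi := fun x y => x * y) (mulr0 _) Hr Hf).
  + move=> i; exact: NV_mull (Hr i) (Hf i) (Nf i).
Qed.

Lemma gl_Zg C i h : ZC None C h -> Zg C (gl i h).
Proof.
move=> [Hh Nh]; split; first exact: gl_B.
move=> j; rewrite fi_gl; case: (j == i) => //; exact: NV_zero.
Qed.

Definition GA C g := [/\ Bn g, ~ Zg C g &
  forall r, Bn r -> exists k, Zg C (fadd (fmul r g) (fopp (fscale k g)))].

Lemma gl_GA C i h : RA None C h -> GA C (gl i h).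
Proof.
move=> [Hb Hz Ha]; split.
- exact: gl_B.
- move=> [_ H]; apply: Hz; split => //; have := H i; by rewrite fi_gl eqxx.
- move=> r Hr; have [k Hk] := Ha _ (Hr i); exists k.
  have -> : fadd (fmul r (gl i h)) (fopp (fscale k (gl i h))) =
            gl i (fun y => r (i, y) * h y - k * h y).
    apply: functional_extensionality => [[j x]]; rewrite /fadd /fmul /fopp /fscale /gl /=.
    case: eqP => [->//|_]; by rewrite !mulr0 subrr.
  exact: gl_Zg.
Qed.

Lemma gl_f0 i : gl i f0 = f0.
Proof. apply: functional_extensionality => x; rewrite /gl /f0; by case: (_ == _). Qed.

Lemma gl_add i f g : gl i (fadd f g) = fadd (gl i f) (gl i g).
Proof.
apply: functional_extensionality => x; rewrite /gl /fadd; case: (_ == _) => //; by rewrite addr0.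
Qed.

Lemma sum_gl f : f = fsum (map (fun i => gl i (fi f i)) (enum 'I_n)).
Proof.
apply: functional_extensionality => [[j x]].
rewrite fsumE big_map /gl /fi /=.
rewrite -big_mkcond -big_filter.
have -> : [seq i <- enum 'I_n | j == i] = [:: j].
  rewrite (eq_filter (a2 := pred1 j)); last by move=> i /=; rewrite eq_sym.
  rewrite filter_pred1_uniq ?enum_uniq // mem_enum //.
by rewrite big_seq1.
Qed.

End Glob.

Lemma Sseq_eq (K : fieldType) (X : Type) (P : fpred K X) (T : wo) t :
  Sseq P T t = fun f => (is_zero (@ext_lt T) t /\ f = f0) \/
    (exists s (h : ext_lt s t), is_pred (@ext_lt T) s t /\ soc_next P (Sseq P T s) f) \/
    (is_limit (@ext_lt T) t /\ exists s (h : ext_lt s t), Sseq P T s f).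
Proof.
rewrite /Sseq /soc_seq Fix_eq //.
move=> x f g H.
have -> : f = g by apply: functional_extensionality_dep => y;
   apply: functional_extensionality_dep => p; apply: H.
by [].
Qed.

Lemma in_In (A : eqType) (x : A) (s : seq A) : x \in s -> List.In x s.
Proof.
elim: s => //= y s IH; rewrite in_cons => /orP [/eqP ->|H]; [by left|right; exact: IH].
Qed.

Section Soc.
Variables (K : fieldType) (T : wo) (n : nat).
Local Notation Rw := (@ext_lt T).
Local Notation Pt := (Pt T).
Local Notation X := ('I_n * Pt)%type.
Local Notation D := (D K (T:=T)).
Local Notation B := (@B K T).
Local Notation V := (@V K T).
Local Notation Node := (@Node T).
Local Notation NV := (@NV K T).
Local Notation ZC := (@ZC K T).
Local Notation Bn := (Bn K T n).
Local Notation Zg := (@Zg K T n).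

Lemma app_eq (A : Type) (F G : fpred K A) f : F = G -> F f = G f.
Proof. by move->. Qed.

Lemma soc_eq beta : soc_next Bn (Zg (fun t => ~ Rw t beta)) = Zg (fun t => Rw beta t).
Proof.
apply: functional_extensionality => f; apply: propositional_extensionality; split.
- apply: soc_sub; [exact: (Zg_ideal K n)| |].
  + move=> g [Hg Ng]; split => // i; apply: NV_mono (Ng i) => t Ht; exact: Rw_asym.
  + move=> M HM g Mg; apply: NNPP => nJ.
    have Pg : Bn g by case: HM => [[H _ _ _ _] _ _ _]; apply: H.
    have [i Hi] : exists i, ~ NV None (fun t => Rw beta t) (fi g i).
      apply: NNPP => H; apply: nJ; split => // i; apply: NNPP => H'; apply: H; by exists i.
    have [e1 [e2 [He1 He2 Hio nZ1 nZ2]]] := Split (Bn_B i Pg) Hi.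
    have comp : forall e, fi (fmul g (gl i e)) i = (fun x => g (i, x) * e x).
      move=> e; apply: functional_extensionality => x; by rewrite /fi /fmul /gl /= eqxx.
    apply: (minimal_split (Zg_ideal K n _) HM Mg (gl_B i He1) (gl_B i He2)).
    * move=> [j x]; rewrite /gl /=; case: (j == i); first exact: Hio.
      by rewrite !mul0r.
    * move=> [Hb HN]; apply: nZ1; split; [have := Hb i|have := HN i]; by rewrite -/(fi _ i) comp.
    * move=> [Hb HN]; apply: nZ2; split; [have := Hb i|have := HN i]; by rewrite -/(fi _ i) comp.
- move=> [Hf Nf].
  apply: (soc_sup (A := GA (fun t => ~ Rw t beta))) => //.
  + move=> g [Hg nZ Hat].
    have [Hmin Mgg] := atom_minimal (Bn_falg K T n) (Zg_ideal K n _) Hg nZ Hat.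
    by eexists; split; [exact: Hmin|].
  + rewrite (sum_gl f); apply: DecP_sum; [exact: (I_0 (Zg_ideal K n _))|exact: (I_add (Zg_ideal K n _))|].
    move=> h /List.in_map_iff [i [<- _]].
    apply: (DecP_map (F := gl i) (A := RA None (fun t => ~ Rw t beta))
       (Zp := ZC None (fun t => ~ Rw t beta))).
    * have := gl_f0 K T i. exact.
    * exact: gl_add.
    * move=> g; exact: gl_GA.
    * move=> z; exact: gl_Zg.
    * exact: Dec (Bn_B i Hf) (Nf i).
Qed.

Lemma Zg_zero t f : is_zero Rw t -> (Zg (fun v => ~ Rw v t) f <-> f = f0).
Proof.
move=> Hz; split.
- move=> [Hf Nf]; apply: functional_extensionality => [[i x]].
  case: (classic (D None x)) => Hx; last exact: B_vanish (Bn_B i Hf) Hx.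
  have [t0 [Hn Hz0]] := Leaf Hx.
  apply: (Nf i x t0 _ Hn (Hz t0)); left; split => //; by rewrite cats0.
- move=> ->; split; first by move=> i; exact: B0.
  move=> i; exact: NV_zero.
Qed.

Lemma Zg_C (C C' : option T -> Prop) : (forall v, C v <-> C' v) -> Zg C = Zg C'.
Proof.
move=> H; have -> // : C = C'.
apply: functional_extensionality => v; exact: propositional_extensionality.
Qed.

Lemma Sseq_Z t : Sseq Bn T t = Zg (fun v => ~ Rw v t).
Proof.
induction (ext_wf T t) as [t _ IH].
rewrite Sseq_eq; apply: functional_extensionality => f; apply: propositional_extensionality.
case: (ord_cases t) => [Hz|[[s Hp]|Hl]].
- split.
  + case=> [[_ ->]|[[s [h _]]|[[[s Hs] _] _]]]; [by apply/(Zg_zero _ Hz)|by case: (Hz s h)|by case: (Hz s)].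
  + move/(Zg_zero _ Hz) ->; by left.
- have EC : Zg (fun v => Rw s v) = Zg (fun v => ~ Rw v t).
    apply: Zg_C => v; split.
    + move=> Hsv Hvt; case: Hp => [_ H]; case: (H _ Hvt) => [E|H'].
      * subst; exact: Rw_irr Hsv.
      * exact: Rw_asym Hsv H'.
    + move=> Hvt; case: (Rw_total v t) => [//|[E|H]].
      * subst; exact: (proj1 Hp).
      * exact: Rw_trans (proj1 Hp) H.
  split.
  + case=> [[Hz _]|[[s' [h [Hp' Hs]]]|[[_ Hnp] _]]].
    * by case: (Hz s (proj1 Hp)).
    * rewrite (pred_uniq Hp' Hp) in h Hs *; rewrite IH in Hs; last exact: (proj1 Hp).
      by rewrite -(app_eq f EC) -(app_eq f (soc_eq s)).
    * by case: Hnp; exists s.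
  + move=> Hf; right; left; exists s, (proj1 Hp); split => //.
    rewrite IH; last exact: (proj1 Hp).
    by rewrite (app_eq f (soc_eq s)) (app_eq f EC).
- split.
  + case=> [[Hz _]|[[s' [h [Hp' Hs]]]|[_ [s [h Hs]]]]].
    * by case: Hl => [[s Hs] _]; case: (Hz s).
    * by case: Hl => _ []; exists s'.
    * rewrite IH // in Hs; case: Hs => [Hb HN]; split => // i.
      apply: NV_mono (HN i) => v Hv Hvs; apply: Hv; exact: Rw_trans Hvs h.
  + move=> [Hf Nf]; right; right; split => //.
    have Hm : forall (i : 'I_n) s s', NV None (fun v => ~ Rw v s) (fi f i) -> s = s' \/ Rw s s' ->
        NV None (fun v => ~ Rw v s') (fi f i).
      move=> i s s' H Hss'; apply: NV_mono H => v Hv Hvs; apply: Hv.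
      case: Hss' => [<-//|H']; exact: Rw_trans Hvs H'.
    have [s [Hst Hs]] := lim_combine Hl Hm (L := enum 'I_n)
        (fun i _ => Lim Hl (Bn_B i Hf) (Nf i)).
    exists s, Hst; rewrite IH //; split => // i; apply: Hs.
    apply: in_In; by rewrite mem_enum.
Qed.

End Soc.

Section Layer.
Variables (K : fieldType) (T : wo) (n : nat).
Local Notation Rw := (@ext_lt T).
Local Notation Pt := (Pt T).
Local Notation X := ('I_n * Pt)%type.
Local Notation D := (D K (T:=T)).
Local Notation B := (@B K T).
Local Notation V := (@V K T).
Local Notation Node := (@Node T).
Local Notation NV := (@NV K T).
Local Notation Bn := (Bn K T n).
Local Notation Zg := (@Zg K T n).

Definition val (t : option T) (g : Pt -> K) : K := epsilon (inhabits 0) (fun c => V t g c).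

Lemma val_eq t g c : V t g c -> val t g = c.
Proof.
move=> H; have := epsilon_spec (inhabits 0) (fun c => V t g c) (ex_intro _ c H).
rewrite -/(val t g) => H'; exact: V_uniq H' H.
Qed.

Variables (beta : option T) (Ix : Type) (nd : Ix -> X).
Hypothesis nd_inj : injective nd.
Hypothesis nd_node : forall v, Node None (nd v).2 beta.
Hypothesis nd_surj : forall i p, Node None p beta -> exists v, nd v = (i, p).
Hypothesis inhIx : inhabited Ix.

Local Notation Cb := (fun t => ~ Rw t beta).
Local Notation Cb' := (fun t => Rw beta t).

Definition phi (f : X -> K) (v : Ix) : K := val beta (fun y => f ((nd v).1, (nd v).2 ++ y)).

Lemma phiV f v : Bn f -> V beta (fun y => f ((nd v).1, (nd v).2 ++ y)) (phi f v).
Proof.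
move=> Hf; have [c Hc] := node_val (nd_node v) (Bn_B (nd v).1 Hf).
by rewrite /phi (val_eq Hc).
Qed.

Lemma phi_add f g : Bn f -> Bn g -> phi (fadd f g) = fun v => phi f v + phi g v.
Proof.
move=> Hf Hg; apply: functional_extensionality => v; apply: val_eq.
exact: (V_op (fun x y => x + y) (phiV v Hf) (phiV v Hg)).
Qed.

Lemma phi_scale k f : Bn f -> phi (fscale k f) = fun v => k * phi f v.
Proof.
move=> Hf; apply: functional_extensionality => v; apply: val_eq.
exact: (V_op (fun x _ => k * x) (phiV v Hf) (phiV v Hf)).
Qed.

Lemma phi_mul f g : Bn f -> Bn g -> phi (fmul f g) = fun v => phi f v * phi g v.
Proof.
move=> Hf Hg; apply: functional_extensionality => v; apply: val_eq.
exact: (V_op (fun x y => x * y) (phiV v Hf) (phiV v Hg)).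
Qed.

Lemma phi_f0 v : phi f0 v = 0.
Proof. apply: val_eq; exact: V_zero. Qed.

Definition E (v0 : Ix) : X -> K := gl (nd v0).1 (ind K (nd v0).2 beta).

Lemma E_J v0 : Zg Cb' (E v0).
Proof.
split; first by apply: gl_B; exact: ind_B (nd_node v0).
move=> j; rewrite /E fi_gl; case: (j == _); last exact: NV_zero.
move=> p t c Hn Ct Hv.
have Hp : p <> (nd v0).2.
  move=> E'; subst p; have := Node_det Hn (nd_node v0) => E'; subst t; exact: Rw_irr Ct.
exact: (proj2 (ind_val (nd_node v0) Hn (Rw_asym Ct) Hv) Hp).
Qed.

Lemma phi_E v0 v : (v = v0 -> phi (E v0) v = 1) /\ (v <> v0 -> phi (E v0) v = 0).
Proof.
have HV := phiV v (proj1 (E_J v0)).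
move: HV; rewrite /E /gl /=.
case: eqP => Ei.
- move=> HV; have [H1 H2] := ind_val (nd_node v0) (nd_node v) (@Rw_irr T beta) HV.
  split => [Ev|Hne]; first by apply: H1; rewrite Ev.
  apply: H2 => Ep; apply: Hne; apply: nd_inj.
  by case: (nd v) Ei Ep => a b; case: (nd v0) => a' b' /= -> ->.
- move=> HV; split => [E'|_]; first by subst.
  exact: V_uniq HV (V_zero K beta).
Qed.

Lemma Jiff f : soc_next Bn (Sseq Bn T beta) f <-> Zg Cb' f.
Proof. by rewrite Sseq_Z (app_eq f (soc_eq K n beta)). Qed.

Lemma layer : layer_iso Bn (Sseq Bn T beta) Ix.
Proof.
have HI := Zg_ideal K n Cb'.
have HP := Bn_falg K T n.
exists phi => /=; split.
- move=> f /Jiff [Hf Nf].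
  have [LL HLL] : exists LL : list X, forall i, List.In i (enum 'I_n) -> forall p c,
      Node None p beta -> V beta (fun y => f (i, p ++ y)) c -> c <> 0 -> List.In (i, p) LL.
    elim: (enum 'I_n) => [|i l [LL0 H0]]; first by exists [::].
    have [Lp HLp] := Fin (Bn_B i Hf) (Nf i).
    exists (map (fun p => (i, p)) Lp ++ LL0) => j [E'|Hj] p c Hn Hv Hc; apply: List.in_or_app.
    + subst j; left; apply: (List.in_map (fun p => (i, p))); exact: HLp Hn Hv Hc.
    + right; exact: H0 Hj p c Hn Hv Hc.
  exists (map (fun x => epsilon inhIx (fun v => nd v = x)) LL) => v Hv.
  apply: NNPP => Hc.
  have Hin : List.In (nd v) LL.
    have := HLL (nd v).1 (in_In (mem_enum _ _)) _ _ (nd_node v) (phiV v Hf) Hc.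
    by case: (nd v).
  apply: Hv; have Ee := epsilon_spec inhIx (fun w => nd w = nd v) (ex_intro _ v erefl).
  rewrite -(nd_inj Ee); exact: (List.in_map (fun x => epsilon inhIx (fun v => nd v = x))).
- split.
  + move=> f g /Jiff [Hf _] /Jiff [Hg _]; exact: phi_add.
  + move=> k f /Jiff [Hf _]; exact: phi_scale.
  + move=> f g /Jiff [Hf _] /Jiff [Hg _]; exact: phi_mul.
  + move=> w [L HL].
    have [f [Jf Hf]] : exists f, Zg Cb' f /\ forall v,
        (List.In v L -> phi f v = w v) /\ (~ List.In v L -> phi f v = 0).
      elim: L {HL} => [|v0 L [f [Jf Hf]]].
      * exists f0; split; first exact: I_0 HI.
        move=> v; split => // _; exact: phi_f0.
      * pose c := w v0 - phi f v0.
        exists (fadd f (fscale c (E v0))); split.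
          apply: (I_add HI Jf); exact: (I_scale HP HI c (E_J v0)).
        have Hf' := proj1 Jf; have HE := proj1 (E_J v0).
        have HcE : Bn (fscale c (E v0)) by case: HP => _ [_ _ _ H _]; exact: H.
        move=> v; rewrite (phi_add Hf' HcE) (phi_scale c HE).
        case: (classic (v = v0)) => Ev.
        -- subst v; rewrite (proj1 (phi_E v0 v0) erefl) mulr1 /c addrC subrK.
           by split => // H; case: H; left.
        -- rewrite (proj2 (phi_E v0 v) Ev) mulr0 addr0; case: (Hf v) => H1 H2.
           split => H; [apply: H1; case: H => // E'; by case: Ev|apply: H2 => H'; apply: H; by right].
    exists f; split; first by apply/Jiff.
    apply: functional_extensionality => v; case: (classic (List.In v L)) => Hv.
    * by case: (Hf v) => H _; apply: H.
    * by rewrite (proj2 (Hf v) Hv) HL.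
  + move=> f /Jiff [Hf Nf]; rewrite Sseq_Z; split.
    * move=> H0; split => // i p t c Hn Ct Hv.
      case: (Rw_total t beta) => [H|[Et|H]]; [by case: Ct| |exact: Nf i p t c Hn H Hv].
      subst t; have [v Ev] := nd_surj i Hn.
      have := phiV v Hf; rewrite Ev /= => Hv'.
      rewrite (V_uniq Hv Hv'); have := congr1 (fun F => F v) H0; by move=> /= ->.
    * move=> [_ N0]; apply: functional_extensionality => v.
      exact: (N0 (nd v).1 (nd v).2 beta _ (nd_node v) (@Rw_irr T beta) (phiV v Hf)).
Qed.

End Layer.

Section Main.
Variables (K : fieldType) (T : wo) (n : nat).
Hypothesis Hn : (0 < n)%N.
Local Notation Rw := (@ext_lt T).
Local Notation Pt := (Pt T).
Local Notation X := ('I_n * Pt)%type.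
Local Notation Bn := (Bn K T n).
Local Notation Zg := (@Zg K T n).
Local Notation Node := (@Node T).

Definition IxB (beta : option T) := {x : X | Node None x.2 beta}.

Lemma IxB_layer beta : inhabited (IxB beta) /\ layer_iso Bn (Sseq Bn T beta) (IxB beta).
Proof.
have nd_inj : injective (@proj1_sig X (fun x => Node None x.2 beta)).
  move=> [x Hx] [y Hy] /= E; subst y; f_equal; exact: proof_irrelevance.
have inh : inhabited (IxB beta).
  have [p Hp] : exists p, Node None p beta.
    apply: Node_ex; case: (beta) => [b|]; [by right|by left].
  by constructor; exists (Ordinal Hn, p).
split => //.
apply: (layer K nd_inj) => //.
- by move=> [x Hx].
- move=> i p Hp; by exists (exist _ (i, p) Hp).
Qed.

Lemma loewyT : loewy Bn T.
Proof.
split.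
- move=> f; rewrite Sseq_Z (app_eq f (soc_eq K n None)); split; first by case.
  by move=> Hf; split => // i p t c _ [].
- rewrite Sseq_Z => H.
  have He : Bn (fun ix => u K None ix.2) by move=> i; exact: u_B.
  have [_ N] := proj2 (H _) He.
  have := N (Ordinal Hn) [::] None 1 (Nroot None) (@Rw_irr T None) (u_V K None).
  by move/eqP; rewrite oner_eq0.
Qed.

Lemma topT : top_dim Bn T n.
Proof.
apply: (layer K (nd := fun i : 'I_n => (i, [::] : Pt))).
- by move=> i j [].
- move=> i; exact: Nroot.
- move=> i p Hp; exists i; have [-> _] := only_root Hp (@Rw_irr T None); by [].
- by constructor; exact: Ordinal Hn.
Qed.

Lemma in_RK_Bn : in_RK Bn.
Proof.
split; [exact: Bn_falg|move=> a Ha; exact: Bn_vN Ha|].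
exists T; split; first exact: loewyT.
move=> beta; exists (IxB beta); exact: IxB_layer.
Qed.

Lemma countable_Bn : countable T -> countable_type Bn.
Proof.
move=> [fT fTi]; split; first exact: in_RK_Bn.
exists T; split; [exact: loewyT|by exists fT|].
move=> beta; exists (IxB beta); have [H1 H2] := IxB_layer beta; split => //.
pose cl (l : nat + option T) : nat + option nat :=
  match l with inl m => inl m | inr o => inr (omap fT o) end.
have cl_inj : injective cl.
  move=> [m|o] [m'|o'] //= [E].
  - by subst.
  - congr inr; case: o o' E => [a|] [b|] //= [E]; by rewrite (fTi _ _ E).
pose cx (x : X) : 'I_n * seq (nat + option nat) := (x.1, map cl x.2).
exists (fun v : IxB beta => pickle (cx (proj1_sig v))).
move=> [[i p] Hp] [[j q] Hq] /= /(pcan_inj pickleK_inv) [E1 /(inj_map cl_inj) E2]; subst.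
f_equal; exact: proof_irrelevance.
Qed.

End Main.

Theorem lemma6p6 (K : fieldType) (T : wo) (n : nat) :
  (0 < n)%N ->
  [/\ in_RK (Bn K T n), loewy (Bn K T n) T, top_dim (Bn K T n) T n &
      (countable T -> countable_type (Bn K T n))].
Proof.
move=> Hn; split; [exact: in_RK_Bn|exact: loewyT|exact: topT|exact: countable_Bn].
Qed.
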